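(* Let $p$ be a program. Then $p$ is in $\to_{\mathrm{und}}$-normal form (there is no $q$ with $p\to_{\mathrm{und}}q$) if and only if $\mathrm{unorm}(p)$.
   Context: Syntax. Terms $t,u,s ::= x\mid\lambda x.t\mid t\,u$; values $v ::= \lambda x.t$ (variables are not values); environments $E ::= \epsilon\mid E[x\leftarrow t]$; programs $p ::= (t,E)$; $x$ is bound in $E$ and $u$ in $(u,E[x\leftarrow t])$; up to $\alpha$; appended ES bind variables not in the domain of the program/context. Inert terms $i ::= x\mid i\,f$, fireballs $f ::= v\mid i$, non-variable inert terms $i^{+} ::= i\,f$. Contexts. Open term evaluation contexts $\mathcal{H} ::= \langle\cdot\rangle\mid\mathcal{H}\,t\mid i\,\mathcal{H}$; applicative term contexts $\mathcal{H}^{@} ::= \langle\cdot\rangle\,t\mid\mathcal{H}^{@}\,t\mid i\,\mathcal{H}^{@}$. Term contexts $C ::= \langle\cdot\rangle\mid C\,t\mid t\,C$; environment contexts $G ::= E[x\leftarrow C]\mid G[x\leftarrow u]$; program contexts $P ::= (C,E)\mid(t,G)$. Appending: $(t,E)@[x\leftarrow u]=(t,E[x\leftarrow u])$, $(C,E)@[x\leftarrow u]=(C,E[x\leftarrow u])$, $(t,G)@[x\leftarrow u]=(t,G[x\leftarrow u])$, and $(t,E)@[x\leftarrow C]:=(t,E[x\leftarrow C])$. Plugging: $(C,E)\langle(t,E')\rangle=(C\langle t\rangle,E'E)$; $(u,E[x\leftarrow C])\langle(t,E')\rangle=(u,E[x\leftarrow C\langle t\rangle]E')$; $(u,G[x\leftarrow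 s])\langle(t,E)\rangle=((u,G)\langle(t,E)\rangle)@[x\leftarrow s]$; $P\langle t\rangle:=P\langle(t,\epsilon)\rangle$. Look-up $P(x)=t$ if the ES list of $P$ contains $[x\leftarrow t]$ with $t$ a term, $\bot$ otherwise. $v^{\alpha}$: copy of $v$ with fresh bound variables. Variable sets. $nv(x)=\{x\}$, $nv(\lambda x.t)=\emptyset$, $nv(tu)=nv(t)\cup nv(u)$; $nv((t,\epsilon))=nv(t)$, $nv((t,E[x\leftarrow u]))=nv((t,E))$ if $x\notin nv((t,E))$, else $(nv((t,E))\setminus\{x\})\cup nv(u)$. $an(\lambda x.t)=an(x)=\emptyset$; $an(tu)=\{x\}\cup an(u)$ if $t=x$ variable, else $an(t)\cup an(u)$; $an((t,\epsilon))=an(t)$; $an((t,E[x\leftarrow u]))$ is $an((t,E))$ if $x\notin nv((t,E))$; $(an((t,E))\setminus\{x\})\cup an(u)$ if $x\in nv((t,E))$ and ($x\notin an((t,E))$ or $u$ not a variable); $(an((t,E))\setminus\{x\})\cup\{y\}$ if $x\in nv((t,E))$, $x\in an((t,E))$, $u=y$ variable; $an(\langle\cdot\rangle)=\emptyset$, $an(\mathcal{H}\,t)=an(\mathcal{H})$, $an(i\,\mathcal{H})=an(i)\cup an(\mathcal{H})$. $un(\lambda x.t)=\emptyset$, $un(x)=\{x\}$, $un(tu)=un(u)$ if $t$ variable, else $un(t)\cup un(u)$; $un((t,\epsilon))=un(t)$; $un((t,E[x\leftarrow u]))$ is $un((t,E))$ if $x\notin un((t,E))$ and ($x\notin nv((t,E))$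 or $u$ a variable), and $(un((t,E))\setminus\{x\})\cup un(u)$ if $x\in un((t,E))$ or ($x\in nv((t,E))$ and $u$ not a variable); $un(\langle\cdot\rangle)=\emptyset$, $un(\mathcal{H}\,t)=un(\mathcal{H})$, $un(i\,\mathcal{H})=un(i)\cup un(\mathcal{H})$. $\mathrm{upd}(S,x,y):=S$ if $x\notin S$, else $(S\setminus\{x\})\cup\{y\}$. Multiplicative contexts $P\in\mathcal{M}_{{\mathcal{U}},{\mathcal{A}}}$, inductively: $(\mathcal{H},\epsilon)\in\mathcal{M}_{un(\mathcal{H}),an(\mathcal{H})}$; and, each with premise $P\in\mathcal{M}_{{\mathcal{U}},{\mathcal{A}}}$: $x\in{\mathcal{U}}\cup{\mathcal{A}}$ $\Rightarrow$ $P@[x\leftarrow y]\in\mathcal{M}_{\mathrm{upd}({\mathcal{U}},x,y),\mathrm{upd}({\mathcal{A}},x,y)}$; $x\notin{\mathcal{U}}\cup{\mathcal{A}}$ $\Rightarrow$ $P@[x\leftarrow t]\in\mathcal{M}_{{\mathcal{U}},{\mathcal{A}}}$; $x\in{\mathcal{U}}\cup{\mathcal{A}}$ $\Rightarrow$ $P@[x\leftarrow i^{+}]\in\mathcal{M}_{({\mathcal{U}}\setminus\{x\})\cup un(i^{+}),({\mathcal{A}}\setminus\{x\})\cup an(i^{+})}$; $x\in{\mathcal{U}}\setminus{\mathcal{A}}$ $\Rightarrow$ $P@[x\leftarrow v]\in\mathcal{M}_{{\mathcal{U}}\setminus\{x\},{\mathcal{A}}}$; $x\notin{\mathcal{U}}\cup{\mathcal{A}}$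 $\Rightarrow$ $P\langle x\rangle@[x\leftarrow\mathcal{H}]\in\mathcal{M}_{{\mathcal{U}}\cup un(\mathcal{H}),{\mathcal{A}}\cup an(\mathcal{H})}$. Exponential contexts $P\in\mathcal{X}_{{\mathcal{U}},{\mathcal{A}}}$, inductively: $(\mathcal{H}^{@},\epsilon)\in\mathcal{X}_{un(\mathcal{H}^{@}),an(\mathcal{H}^{@})}$; $P\in\mathcal{M}_{{\mathcal{U}},{\mathcal{A}}}$, $x\notin{\mathcal{U}}\cup{\mathcal{A}}$ $\Rightarrow$ $P\langle x\rangle@[x\leftarrow\mathcal{H}^{@}]\in\mathcal{X}_{({\mathcal{U}}\setminus\{x\})\cup un(\mathcal{H}^{@}),{\mathcal{A}}\cup an(\mathcal{H}^{@})}$; and, each with premise $P\in\mathcal{X}_{{\mathcal{U}},{\mathcal{A}}}$: $x\in{\mathcal{U}}\cup{\mathcal{A}}$ $\Rightarrow$ $P@[x\leftarrow y]\in\mathcal{X}_{\mathrm{upd}({\mathcal{U}},x,y),\mathrm{upd}({\mathcal{A}},x,y)}$; $x\in{\mathcal{U}}\cup{\mathcal{A}}$ $\Rightarrow$ $P@[x\leftarrow i^{+}]\in\mathcal{X}_{({\mathcal{U}}\setminus\{x\})\cup un(i^{+}),({\mathcal{A}}\setminus\{x\})\cup an(i^{+})}$; $x\notin{\mathcal{U}}\cup{\mathcal{A}}$ $\Rightarrow$ $P@[x\leftarrow t]\in\mathcal{X}_{{\mathcal{U}},{\mathcal{A}}}$; $x\in{\mathcal{U}}\setminus{\mathcal{A}}$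 $\Rightarrow$ $P@[x\leftarrow v]\in\mathcal{X}_{{\mathcal{U}}\setminus\{x\},{\mathcal{A}}}$; $x\notin{\mathcal{A}}$ $\Rightarrow$ $P\langle x\rangle@[x\leftarrow\langle\cdot\rangle]\in\mathcal{X}_{{\mathcal{U}}\setminus\{x\},{\mathcal{A}}}$. Useful Open CbNeed rules: $P\langle(\lambda x.t)u\rangle\to_{\mathrm{um}}P\langle(t,[x\leftarrow u])\rangle$ if $P\in\mathcal{M}_{{\mathcal{U}},{\mathcal{A}}}$ for some ${\mathcal{U}},{\mathcal{A}}$; $P\langle x\rangle\to_{\mathrm{ue}}P\langle v^{\alpha}\rangle$ if $P\in\mathcal{X}_{{\mathcal{U}},{\mathcal{A}}}$ for some ${\mathcal{U}},{\mathcal{A}}$ and $P(x)=v$; $\to_{\mathrm{und}}:=\to_{\mathrm{um}}\cup\to_{\mathrm{ue}}$. Predicates, inductively. $\mathrm{gvar}_x((x,\epsilon))$; $\mathrm{gvar}_x(p)\Rightarrow\mathrm{gvar}_y(p@[x\leftarrow y])$; $\mathrm{gvar}_x(p)$, $z\neq x$ $\Rightarrow$ $\mathrm{gvar}_x(p@[z\leftarrow t])$. $\mathrm{uabs}((v,\epsilon))$; $\mathrm{gvar}_x(p)\Rightarrow\mathrm{uabs}(p@[x\leftarrow v])$; $\mathrm{uabs}(p)\Rightarrow\mathrm{uabs}(p@[x\leftarrow t])$. $\mathrm{uinert}((i^{+},\epsilon))$; $\mathrm{gvar}_x(p)\Rightarrow\mathrm{uinert}(p@[x\leftarrow i^{+}])$;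 $\mathrm{uinert}(p)$, $x\in nv(p)$ $\Rightarrow$ $\mathrm{uinert}(p@[x\leftarrow i])$; $\mathrm{uinert}(p)$, $x\in un(p)$, $x\notin an(p)$ $\Rightarrow$ $\mathrm{uinert}(p@[x\leftarrow v])$; $\mathrm{uinert}(p)$, $x\notin nv(p)$ $\Rightarrow$ $\mathrm{uinert}(p@[x\leftarrow t])$. $\mathrm{unorm}(p)$ iff $\mathrm{uinert}(p)$ or $\mathrm{uabs}(p)$ or $\mathrm{gvar}_x(p)$ for some $x$. *)

(* Defs.v *)
From Stdlib Require List.
From mathcomp Require Import all_boot.
Set Implicit Arguments. Unset Strict Implicit. Unset Printing Implicit Defensive.

Definition var := nat.

(* Locally nameless terms: bound variables of lambdas are de Bruijn indices
   (so terms are identified up to alpha for lambda-binders), free variables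
   are names.  "Variables" of the paper are the [fvar x]. *)
Inductive term : Type :=
| bvar : nat -> term
| fvar : var -> term
| lam  : term -> term
| app  : term -> term -> term.

Fixpoint open_rec (k : nat) (u t : term) : term :=
  match t with
  | bvar n => if n == k then u else bvar n
  | fvar x => fvar x
  | lam t1 => lam (open_rec k.+1 u t1)
  | app t1 t2 => app (open_rec k u t1) (open_rec k u t2)
  end.
(* t^x : body of a lambda instantiated with the name x *)
Definition open (t : term) (x : var) : term := open_rec 0 (fvar x) t.

Fixpoint lc_at (k : nat) (t : term) : bool :=
  match t with
  | bvar n => n < k
  | fvar _ => true
  | lam t1 => lc_at k.+1 t1
  | app t1 t2 => lc_at k t1 && lc_at k t2
  end.
Definition lc (t : term) : bool := lc_at 0 t.

Fixpoint fv (t : term) : seq var :=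
  match t with
  | bvar _ => [::]
  | fvar x => [:: x]
  | lam t1 => fv t1
  | app t1 t2 => fv t1 ++ fv t2
  end.

Definition is_var (t : term) : bool := if t is fvar _ then true else false.
Definition is_val (t : term) : bool := if t is lam _ then true else false.

(* inert terms  i ::= x | i f ;  fireballs f ::= v | i *)
Fixpoint is_inert (t : term) : bool :=
  match t with
  | fvar _ => true
  | app i f => is_inert i && (is_val f || is_inert f)
  | _ => false
  end.
Definition is_inert_plus (t : term) : bool :=
  if t is app _ _ then is_inert t else false.

Definition sdel (x : var) (S : seq var) : seq var := [seq z <- S | z != x].
Definition upd (S : seq var) (x y : var) : seq var :=
  if x \in S then y :: sdel x S else S.

Fixpoint nvT (t : term) : seq var :=
  match t with
  | fvar x => [:: x]
  | app t1 t2 => nvT t1 ++ nvT t2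
  | _ => [::]
  end.

Fixpoint anT (t : term) : seq var :=
  match t with
  | app t1 t2 =>
      match t1 with
      | fvar x => x :: anT t2
      | _ => anT t1 ++ anT t2
      end
  | _ => [::]
  end.

Fixpoint unT (t : term) : seq var :=
  match t with
  | fvar x => [:: x]
  | app t1 t2 =>
      match t1 with
      | fvar _ => unT t2
      | _ => unT t1 ++ unT t2
      end
  | _ => [::]
  end.

(* An environment is a list of ES, OUTERMOST FIRST:
   E[x<-t] is represented by (x, t) :: E. *)
Definition env := seq (var * term).
Definition prog := (term * env)%type.

Definition pES (p : prog) (x : var) (t : term) : prog := (p.1, (x, t) :: p.2).
Definition dom (p : prog) : seq var := map fst p.2.

Fixpoint nvP_aux (t : term) (E : env) : seq var :=
  match E with
  | [::] => nvT t
  | (x, u) :: E' =>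
      let S := nvP_aux t E' in
      if x \in S then sdel x S ++ nvT u else S
  end.
Definition nvP (p : prog) := nvP_aux p.1 p.2.

Fixpoint anP_aux (t : term) (E : env) : seq var :=
  match E with
  | [::] => anT t
  | (x, u) :: E' =>
      let N := nvP_aux t E' in
      let A := anP_aux t E' in
      if x \notin N then A
      else match u with
           | fvar y => if x \in A then sdel x A ++ [:: y] else sdel x A ++ anT u
           | _ => sdel x A ++ anT u
           end
  end.
Definition anP (p : prog) := anP_aux p.1 p.2.

Fixpoint unP_aux (t : term) (E : env) : seq var :=
  match E with
  | [::] => unT t
  | (x, u) :: E' =>
      let N := nvP_aux t E' in
      let U := unP_aux t E' in
      if (x \in U) || ((x \in N) && ~~ is_var u) then sdel x U ++ unT u else U
  end.
Definition unP (p : prog) := unP_aux p.1 p.2.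

Inductive tctx : Type :=
| Hole : tctx
| CAppL : tctx -> term -> tctx
| CAppR : term -> tctx -> tctx.

Fixpoint plugT (C : tctx) (t : term) : term :=
  match C with
  | Hole => t
  | CAppL C1 u => app (plugT C1 t) u
  | CAppR u C1 => app u (plugT C1 t)
  end.

Fixpoint isH (C : tctx) : bool :=
  match C with
  | Hole => true
  | CAppL C1 _ => isH C1
  | CAppR i C1 => is_inert i && isH C1
  end.
(* applicative contexts  H@ ::= <.> t | H@ t | i H@ *)
Fixpoint isHapp (C : tctx) : bool :=
  match C with
  | Hole => false
  | CAppL C1 _ => if C1 is Hole then true else isHapp C1
  | CAppR i C1 => is_inert i && isHapp C1
  end.

Fixpoint anC (C : tctx) : seq var :=
  match C with
  | Hole => [::]
  | CAppL C1 _ => anC C1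
  | CAppR i C1 => anT i ++ anC C1
  end.
Fixpoint unC (C : tctx) : seq var :=
  match C with
  | Hole => [::]
  | CAppL C1 _ => unC C1
  | CAppR i C1 => unT i ++ unC C1
  end.

(* PC C E        represents (C, E);
   PG u E1 x C E2 represents (u, E1[x<-C]E2)  (E1, E2 outermost first). *)
Inductive pctx : Type :=
| PC : tctx -> env -> pctx
| PG : term -> env -> var -> tctx -> env -> pctx.

Definition pctxES (P : pctx) (x : var) (u : term) : pctx :=
  match P with
  | PC C E => PC C ((x, u) :: E)
  | PG t E1 y C E2 => PG t E1 y C ((x, u) :: E2)
  end.
Definition progC (p : prog) (x : var) (C : tctx) : pctx := PG p.1 p.2 x C [::].

Definition pdom (P : pctx) : seq var :=
  match P with
  | PC _ E => map fst E
  | PG _ E1 y _ E2 => map fst E2 ++ y :: map fst E1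
  end.

Definition plug (P : pctx) (p : prog) : prog :=
  match P with
  | PC C E => (plugT C p.1, E ++ p.2)
  | PG u E1 y C E2 => (u, E2 ++ p.2 ++ (y, plugT C p.1) :: E1)
  end.
Definition plugt (P : pctx) (t : term) : prog := plug P (t, [::]).

Definition lookup (P : pctx) (x : var) (t : term) : Prop :=
  match P with
  | PC _ E => List.In (x, t) E
  | PG _ E1 _ _ E2 => List.In (x, t) E1 \/ List.In (x, t) E2
  end.

Inductive Mctx : pctx -> seq var -> seq var -> Prop :=
| M_base H : isH H -> Mctx (PC H [::]) (unC H) (anC H)
| M_var P U A x y : Mctx P U A -> x \in U ++ A -> x \notin pdom P ->
    Mctx (pctxES P x (fvar y)) (upd U x y) (upd A x y)
| M_gen P U A x t : Mctx P U A -> x \notin U ++ A -> x \notin pdom P ->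
    Mctx (pctxES P x t) U A
| M_inert P U A x i : Mctx P U A -> x \in U ++ A -> is_inert_plus i ->
    x \notin pdom P ->
    Mctx (pctxES P x i) (sdel x U ++ unT i) (sdel x A ++ anT i)
| M_val P U A x v : Mctx P U A -> x \in U -> x \notin A -> is_val v ->
    x \notin pdom P ->
    Mctx (pctxES P x v) (sdel x U) A
| M_hole P U A x H : Mctx P U A -> x \notin U ++ A -> isH H -> x \notin pdom P ->
    Mctx (progC (plugt P (fvar x)) x H) (U ++ unC H) (A ++ anC H).

Inductive Xctx : pctx -> seq var -> seq var -> Prop :=
| X_base H : isHapp H -> Xctx (PC H [::]) (unC H) (anC H)
| X_holeM P U A x H : Mctx P U A -> x \notin U ++ A -> isHapp H ->
    x \notin pdom P ->
    Xctx (progC (plugt P (fvar x)) x H) (sdel x U ++ unC H) (A ++ anC H)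
| X_var P U A x y : Xctx P U A -> x \in U ++ A -> x \notin pdom P ->
    Xctx (pctxES P x (fvar y)) (upd U x y) (upd A x y)
| X_inert P U A x i : Xctx P U A -> x \in U ++ A -> is_inert_plus i ->
    x \notin pdom P ->
    Xctx (pctxES P x i) (sdel x U ++ unT i) (sdel x A ++ anT i)
| X_gen P U A x t : Xctx P U A -> x \notin U ++ A -> x \notin pdom P ->
    Xctx (pctxES P x t) U A
| X_val P U A x v : Xctx P U A -> x \in U -> x \notin A -> is_val v ->
    x \notin pdom P ->
    Xctx (pctxES P x v) (sdel x U) A
| X_hole P U A x : Xctx P U A -> x \notin A -> x \notin pdom P ->
    Xctx (progC (plugt P (fvar x)) x Hole) (sdel x U) A.

Definition allvars (p : prog) : seq var :=
  fv p.1 ++ flatten [seq e.1 :: fv e.2 | e <- p.2].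

(* multiplicative step; the lambda-bound variable is instantiated with a
   name x fresh for the whole program (alpha-renaming convention) *)
Definition step_um (p q : prog) : Prop :=
  exists P U A t u x,
    Mctx P U A /\ p = plugt P (app (lam t) u) /\ x \notin allvars p /\
    q = plug P (open t x, [:: (x, u)]).

(* exponential step; in the locally nameless syntax the fresh copy v^alpha
   of v is v itself *)
Definition step_ue (p q : prog) : Prop :=
  exists P U A x v,
    Xctx P U A /\ p = plugt P (fvar x) /\ lookup P x v /\ is_val v /\
    q = plugt P v.

Definition step_und (p q : prog) : Prop := step_um p q \/ step_ue p q.

Inductive gvar : var -> prog -> Prop :=
| gvar_base x : gvar x (fvar x, [::])
| gvar_ren x y p : gvar x p -> x \notin dom p -> gvar y (pES p x (fvar y))
| gvar_skip x z t p : gvar x p -> z != x -> z \notin dom p -> gvar x (pES p z t).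

Inductive uabs : prog -> Prop :=
| uabs_base v : is_val v -> uabs (v, [::])
| uabs_var x p v : gvar x p -> is_val v -> x \notin dom p -> uabs (pES p x v)
| uabs_skip x p t : uabs p -> x \notin dom p -> uabs (pES p x t).

Inductive uinert : prog -> Prop :=
| uinert_base i : is_inert_plus i -> uinert (i, [::])
| uinert_var x p i : gvar x p -> is_inert_plus i -> x \notin dom p ->
    uinert (pES p x i)
| uinert_inert x p i : uinert p -> x \in nvP p -> is_inert i -> x \notin dom p ->
    uinert (pES p x i)
| uinert_val x p v : uinert p -> x \in unP p -> x \notin anP p -> is_val v ->
    x \notin dom p -> uinert (pES p x v)
| uinert_skip x p t : uinert p -> x \notin nvP p -> x \notin dom p ->
    uinert (pES p x t).

Definition unorm (p : prog) : Prop := uinert p \/ uabs p \/ exists x, gvar x p.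

(* all terms locally closed; ES-bound names pairwise distinct; and every
   ES-bound name occurs free only within its scope (Barendregt convention):
   the name bound by an ES does not occur free in its own ES term nor in
   any ES further out. *)
Fixpoint scoped (E : env) : bool :=
  match E with
  | [::] => true
  | (x, u) :: E' => all (fun y => y \notin fv u) (x :: map fst E') && scoped E'
  end.

Definition wf_prog (p : prog) : bool :=
  lc p.1 && all (fun e => lc e.2) p.2 && uniq (dom p) && scoped p.2.

(* Main.v *)
Require Import Defs.
From mathcomp Require Import all_boot.
Set Implicit Arguments. Unset Strict Implicit. Unset Printing Implicit Defensive.

Lemma mem_sdel (x y : var) S : (y \in sdel x S) = (y != x) && (y \in S).
Proof. by rewrite /sdel mem_filter. Qed.

Lemma mem_upd (S : seq var) x z y :
  (y \in upd S x z) = (if x \in S then (y == z) || ((y != x) && (y \in S)) else y \in S).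
Proof. by rewrite /upd; case: (x \in S); rewrite ?in_cons ?mem_sdel. Qed.

Lemma pES_inj p x u q y w : pES p x u = pES q y w -> [/\ p = q, x = y & u = w].
Proof. by case: p => a b; case: q => c d; rewrite /pES /= => -[-> -> -> ->]. Qed.

Lemma pES_nil t p x u : (t, [::]) <> pES p x u.
Proof. by case: p. Qed.

Lemma plugt_ES P x u s : plugt (pctxES P x u) s = pES (plugt P s) x u.
Proof. by case: P. Qed.

Lemma plugt_progC p x H s : plugt (progC p x H) s = pES p x (plugT H s).
Proof. by case: p. Qed.

Lemma pdom_plugt P s : pdom P = dom (plugt P s).
Proof.
case: P => [C E|u E1 y C E2]; rewrite /dom /= ?cats0 //.
by rewrite map_cat /=.
Qed.

Lemma pdom_ES P x u : pdom (pctxES P x u) = x :: pdom P.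
Proof. by case: P. Qed.

Lemma pdom_progC p x H : pdom (progC p x H) = x :: dom p.
Proof. by case: p. Qed.

Lemma dom_ES p x u : dom (pES p x u) = x :: dom p.
Proof. by case: p. Qed.

Lemma lookup_ES P x u y v : lookup (pctxES P x u) y v -> (y = x /\ v = u) \/ lookup P y v.
Proof.
case: P => [C E|t E1 z C E2] /=.
  by case=> [[-> ->]|H]; [left|right].
by case=> [H|[[-> ->]|H]]; [right; left|left|right; right].
Qed.

Lemma lookup_ES' P x u y v : lookup P y v -> lookup (pctxES P x u) y v.
Proof. by case: P => [C E|t E1 z C E2] /=; [right|case; [left|right; right]]. Qed.

Lemma In_mem (E : env) y v : List.In (y, v) E -> y \in map fst E.
Proof.
elim: E => //= [[a b] E IH] [[-> _]|H]; rewrite in_cons ?eqxx //.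
by rewrite IH ?orbT.
Qed.

Lemma lookup_pdom P y v : lookup P y v -> y \in pdom P.
Proof.
case: P => [C E|t E1 z C E2] /=; first exact: In_mem.
case=> H; rewrite mem_cat; apply/orP; [right|left].
  by rewrite in_cons (In_mem H) orbT.
exact: In_mem H.
Qed.

Lemma lookup_In P s y v : lookup P y v -> List.In (y, v) (plugt P s).2.
Proof.
case: P => [C E|t E1 z C E2] /=; first by rewrite cats0.
case=> H; apply: List.in_or_app; [right; right|left] => //.
Qed.

Lemma uniq_In (E : env) y u v : uniq (map fst E) -> List.In (y, u) E -> List.In (y, v) E -> u = v.
Proof.
elim: E => //= [[a b] E IH] /andP[Ha Hu] H1 H2.
case: H1 => [[e1 e2]|H1]; case: H2 => [[e3 e4]|H2].
- by rewrite -e2 -e4.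
- by move: Ha; rewrite e1 (In_mem H2).
- by move: Ha; rewrite e3 (In_mem H1).
- exact: IH.
Qed.

Lemma unT_nv t : {subset unT t <= nvT t}.
Proof.
elim: t => [n|y|t IH|t1 IH1 t2 IH2] a //=.
rewrite mem_cat.
case: t1 IH1 => [n|y|t|t1 t1'] IH1 /= H.
- by rewrite IH2 ?orbT.
- by rewrite IH2 ?orbT.
- by rewrite IH2 ?orbT.
- by move: H; rewrite mem_cat => /orP[/IH1|/IH2] ->; rewrite ?orbT.
Qed.

Lemma anT_nv t : {subset anT t <= nvT t}.
Proof.
elim: t => [n|y|t IH|t1 IH1 t2 IH2] a //=.
rewrite mem_cat.
case: t1 IH1 => [n|y|t|t1 t1'] IH1 /=.
- by move/IH2 => ->; rewrite ?orbT.
- by rewrite !in_cons; case/orP=> [->|/IH2 ->]; rewrite ?orbT.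
- by move/IH2 => ->; rewrite ?orbT.
- by rewrite mem_cat; case/orP=> [/IH1|/IH2] ->; rewrite ?orbT.
Qed.

Lemma inert_nv i : is_inert i -> {subset nvT i <= unT i ++ anT i}.
Proof.
elim: i => [n|y|t IH|t1 IH1 t2 IH2] //=; first by move=> _ a.
move=> /andP[Hi Hf] a.
have Hf2 : {subset nvT t2 <= unT t2 ++ anT t2}.
  case/orP: Hf => [|/IH2 //]. by case: t2 {IH2}.
rewrite mem_cat; case/orP => [H1|H2].
  case: t1 IH1 Hi H1 => //= [y|t1 t1'] IH1 Hi.
    by rewrite inE mem_cat in_cons => ->; rewrite !orbT.
  move/(IH1 Hi); rewrite !mem_cat => /orP[]->; by rewrite ?orbT.
move/Hf2: H2; rewrite !mem_cat.
case: t1 {IH1 Hi} => [n|y|t|t1 t1'] /=; rewrite ?mem_cat ?in_cons;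
  case/orP=> ->; by rewrite ?orbT.
Qed.

Lemma unT_app t1 t2 : unT (app t1 t2) = if t1 is fvar _ then unT t2 else unT t1 ++ unT t2.
Proof. by []. Qed.
Lemma anT_app t1 t2 : anT (app t1 t2) = if t1 is fvar x then x :: anT t2 else anT t1 ++ anT t2.
Proof. by []. Qed.

Lemma unC_sub C s : {subset unC C <= unT (plugT C s) ++ anT (plugT C s)}.
Proof.
elim: C => [|C IH t|i C IH] a //=.
- case: C IH => [|C' t'|i' C'] IH //=; move/IH; rewrite !mem_cat => /orP[]->; by rewrite ?orbT.
- rewrite mem_cat => /orP[H|/IH].
    case: i H => [n|y|t|t1 t2] //=; rewrite ?inE ?mem_cat ?in_cons.
    + by move=> ->; rewrite ?orbT.
    + by move=> ->; rewrite ?orbT.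
  case: i => [n|y|t|t1 t2] /=; rewrite ?mem_cat ?in_cons; case/orP=> ->; by rewrite ?orbT.
Qed.

Lemma anC_sub C s : {subset anC C <= anT (plugT C s)}.
Proof.
elim: C => [|C IH t|i C IH] a //=.
- case: C IH => [|C' t'|i' C'] IH //=; move/IH; rewrite !mem_cat => ->; by rewrite ?orbT.
- rewrite mem_cat => /orP[H|/IH].
    case: i H => [n|y|t|t1 t2] //=; rewrite ?inE ?mem_cat ?in_cons.
    by move=> ->; rewrite ?orbT.
  case: i => [n|y|t|t1 t2] /=; rewrite ?mem_cat ?in_cons => ->; by rewrite ?orbT.
Qed.

Lemma plug_nv C y : y \in nvT (plugT C (fvar y)).
Proof.
elim: C => [|C IH t|i C IH] /=; first by rewrite inE.
  by rewrite mem_cat IH.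
by rewrite mem_cat IH orbT.
Qed.

Lemma plug_fv C y : y \in fv (plugT C (fvar y)).
Proof.
elim: C => [|C IH t|i C IH] /=; first by rewrite inE.
  by rewrite mem_cat IH.
by rewrite mem_cat IH orbT.
Qed.

Lemma isHapp_isH H : isHapp H -> isH H.
Proof.
elim: H => [|C IH t|i C IH] //=.
  by case: C IH => //= C' t' IH /IH.
by case/andP=> -> /IH.
Qed.

Lemma isHapp_app H s : isHapp H -> exists a b, plugT H s = app a b.
Proof. by case: H => [|C t|i C] //= _; eexists; eexists. Qed.

Lemma Happ_an H y : isHapp H -> y \in anT (plugT H (fvar y)).
Proof.
elim: H => [|C IH t|i C IH] //=.
  case: C IH => [|C' t'|i' C'] IH /=; first by move=> _; rewrite in_cons eqxx.
  - by move/IH; rewrite mem_cat => ->.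
  - by move/IH; rewrite mem_cat => ->.
case/andP=> Hi /IH H.
by case: i {Hi} => [n|z|t|t1 t2] /=; rewrite ?mem_cat ?in_cons H ?orbT.
Qed.

Lemma plug_notvar C s : C <> Hole -> ~~ is_var (plugT C s) /\ ~~ is_val (plugT C s).
Proof. by case: C. Qed.

Lemma H_fireball H s : isH H -> is_inert (plugT H s) -> is_val s || is_inert s.
Proof.
elim: H => [|C IH t|i C IH] /=; first by move=> _ ->; rewrite orbT.
  by move=> HC /andP[/(IH HC)].
case/andP=> Hi HC /andP[_].
case: C IH HC => [|C' t'|i' C'] IH HC //=.
- by move=> /= /(IH HC).
- by move=> /= /(IH HC).
Qed.

Lemma TL_I i x : is_inert i -> x \in nvT i ->
  exists H, [/\ isH H, plugT H (fvar x) = i & x \notin unC H ++ anC H].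
Proof.
elim: i => [n|y|t IH|t1 IH1 t2 IH2] //=.
  by move=> _; rewrite inE => /eqP->; exists Hole.
case/andP=> Hi Hf; rewrite mem_cat; case: (boolP (x \in nvT t1)) => [H1 _|H1 /= H2].
  have [H [HH HP HN]] := IH1 Hi H1.
  by exists (CAppL H t2); rewrite /= HP.
have Hf2 : is_inert t2 by case/orP: Hf => //; case: t2 {IH2} H2.
have [H [HH HP HN]] := IH2 Hf2 H2.
exists (CAppR t1 H); rewrite /= Hi HH HP; split => //.
have a1 : x \notin unT t1 by apply: contra H1; apply: unT_nv.
have a2 : x \notin anT t1 by apply: contra H1; apply: anT_nv.
move: HN; rewrite !mem_cat => /norP[b1 b2].
by rewrite (negbTE a1) (negbTE a2) (negbTE b1) (negbTE b2).
Qed.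

Lemma TL_IA i x : is_inert i -> x \in anT i ->
  exists H, [/\ isHapp H, plugT H (fvar x) = i & x \notin anC H].
Proof.
elim: i => [n|y|t IH|t1 IH1 t2 IH2] //=.
case/andP=> Hi Hf.
have Hf2 : x \in anT t2 -> is_inert t2 by case/orP: Hf => //; case: t2 {IH2}.
case: t1 IH1 Hi => [n|y|t|t1 t1'] IH1 Hi //=.
  rewrite in_cons; case/orP => [/eqP->|H2].
    by exists (CAppL Hole t2).
  have [H [HH HP HN]] := IH2 (Hf2 H2) H2.
  by exists (CAppR (fvar y) H); rewrite /= HH HP.
rewrite mem_cat; case: (boolP (x \in anT (app t1 t1'))) => [H1 _|H1 /= H2].
  have [H [HH HP HN]] := IH1 Hi H1.
  exists (CAppL H t2); rewrite /= HP; split => //.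
  by case: H HH {HP HN}.
have [H [HH HP HN]] := IH2 (Hf2 H2) H2.
exists (CAppR (app t1 t1') H); split.
- by move: Hi => /= ->; rewrite HH.
- by rewrite /= HP.
- by rewrite /= mem_cat negb_or H1.
Qed.

Definition inL (a : nat) (S : seq nat) := a \in S.
Lemma inLE (a : nat) (S : seq nat) : (a \in S) = inL a S. Proof. by []. Qed.
Definition eqN (a b : nat) := a == b.
Lemma eqNE (a b : nat) : (a == b) = eqN a b. Proof. by []. Qed.
Lemma eqNxx a : eqN a a = true. Proof. exact: eqxx. Qed.
Lemma eqN_sym a b : eqN a b = eqN b a. Proof. exact: eq_sym. Qed.
Lemma in_if (a : nat) (b : bool) (A B : seq nat) : (a \in if b then A else B) = if b then a \in A else a \in B.
Proof. by case: b. Qed.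
Ltac sets_prep := rewrite ?in_if ?mem_cat ?mem_sdel ?in_cons ?in_nil ?mem_upd ?orbF ?andbT.
Ltac use_eqs := repeat match goal with
  | H : eqN ?a ?b = _ |- context [eqN ?a ?b] => rewrite H
  end.
Ltac pick_atom g := match g with
   | context [eqN ?a ?c] => constr:(eqN a c)
   | context [inL ?a ?S] => constr:(inL a S)
   | context [is_var ?u] => constr:(is_var u)
   end.
Ltac leaf := intros; repeat match goal with H : is_true true -> _ |- _ => specialize (H isT) end;
  first [done | match goal with H : is_true false |- _ => discriminate H end].
Ltac bb0 := try unfold inL; try unfold eqN; rewrite ?eqxx /=; sets_prep; rewrite ?inLE ?eqNE ?eqNxx; use_eqs; first [ leaf |
  let b := match goal with
   | |- context [if ?c then _ else _] => pick_atom c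
   | |- ?g => pick_atom g
   end in
  case: b; bb0 ].
Ltac split_on a x :=
  tryif (have _ : eqN a x = false by assumption) then fail else
  tryif (constr_eq a x) then fail else
  let E := fresh "E" in
  case E: (eqN a x); [ move: (E) => /eqP <-; rewrite ?eqxx
                     | move: (E); rewrite eqN_sym => ? ].
Ltac presplit a := repeat match goal with
  | |- context [sdel ?x _] => split_on a x
  | |- context [upd _ ?x ?z] => first [split_on a x | split_on a z]
  | |- context [@cons nat ?x _] => split_on a x
  | |- context [@cons (Equality.sort _) ?x _] => split_on a x
  | |- context [@eq_op _ a ?x] => split_on a x
  | |- context [@eq_op _ ?x a] => split_on a x
  end.
Ltac bb := bb0.
Ltac bbs a := presplit a; bb0.

Lemma TL_M H s x : isH H -> x \in unC H ++ anC H ->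
  exists H0, [/\ isH H0, plugT H0 (fvar x) = plugT H s, x \notin unC H0 ++ anC H0,
    {subset unC H0 <= unC H ++ anC H} & {subset anC H0 <= anC H}].
Proof.
elim: H => [|C IH t|i C IH] //=.
  move=> HC /(IH HC) [H0 [HH HP HN S1 S2]].
  by exists (CAppL H0 t); rewrite /= HP.
case/andP=> Hi HC Hx.
case: (boolP (x \in nvT i)) => Hn.
  have [Hi0 [HH HP HN]] := TL_I Hi Hn.
  have S1 := @unC_sub Hi0 (fvar x); have S2 := @anC_sub Hi0 (fvar x).
  rewrite HP in S1 S2.
  exists (CAppL Hi0 (plugT C s)); rewrite /= HP; split => // a.
    by move/S1; move: Hx; sets_prep; bb.
  by move/S2; move: Hx; sets_prep; bb.
have a1 : x \notin unT i by apply: contra Hn; apply: unT_nv.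
have a2 : x \notin anT i by apply: contra Hn; apply: anT_nv.
have Hx' : x \in unC C ++ anC C by move: Hx a1 a2; sets_prep; bb.
have [H0 [HH HP HN S1 S2]] := IH HC Hx'.
exists (CAppR i H0); rewrite /= HP Hi HH; split => // [|a|a].
- by move: HN a1 a2; sets_prep; bb.
- by move: (S1 a); sets_prep; bb.
- by move: (S2 a); sets_prep; bb.
Qed.

Lemma TL_MA H s x : isH H -> x \in anC H ->
  exists H0, [/\ isHapp H0, plugT H0 (fvar x) = plugT H s, x \notin anC H0,
    {subset unC H0 <= unC H ++ anC H} & {subset anC H0 <= anC H}].
Proof.
elim: H => [|C IH t|i C IH] //=.
  move=> HC /(IH HC) [H0 [HH HP HN S1 S2]].
  exists (CAppL H0 t); rewrite /= HP; split => //.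
  by case: H0 HH {HP HN S1 S2}.
case/andP=> Hi HC Hx.
case: (boolP (x \in anT i)) => Hn.
  have [Hi0 [HH HP HN]] := TL_IA Hi Hn.
  have S1 := @unC_sub Hi0 (fvar x); have S2 := @anC_sub Hi0 (fvar x).
  rewrite HP in S1 S2.
  exists (CAppL Hi0 (plugT C s)); rewrite /= HP; split => // [|a|a].
  - by case: Hi0 HH {HP HN S1 S2}.
  - by move/S1; move: Hx; sets_prep; bb.
  - by move/S2; move: Hx; sets_prep; bb.
have Hx' : x \in anC C by move: Hx Hn; sets_prep; bb.
have [H0 [HH HP HN S1 S2]] := IH HC Hx'.
exists (CAppR i H0); rewrite /= HP Hi HH; split => // [|a|a].
- by move: HN Hn; sets_prep; bb.
- by move: (S1 a); sets_prep; bb.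
- by move: (S2 a); sets_prep; bb.
Qed.

Definition redex_in (t : term) :=
  exists H t1 t2, isH H /\ t = plugT H (app (lam t1) t2).

Lemma TRM t : lc t -> [\/ is_var t, is_val t, is_inert_plus t | redex_in t].
Proof.
rewrite /lc; elim: t => [n|y|t IH|t1 IH1 t2 IH2] //=; first by constructor 1.
  by constructor 2.
case/andP=> /IH1 H1 /IH2 H2.
have Hi1 : is_inert t1 -> [\/ is_var (app t1 t2), is_val (app t1 t2),
    is_inert_plus (app t1 t2) | redex_in (app t1 t2)].
  move=> Hi; case: H2 => [Hv|Hv|Hv|[H [a [b [HH ->]]]]].
  - by constructor 3; rewrite /is_inert_plus /= Hi; case: t2 Hv {IH2}.
  - by constructor 3; rewrite /is_inert_plus /= Hi Hv.
  - constructor 3; rewrite /is_inert_plus /= Hi.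
    by case: t2 Hv {IH2} => //= ? ? ->; rewrite orbT.
  - by constructor 4; exists (CAppR t1 H), a, b; rewrite /= Hi HH.
case: H1 => [Hv|Hv|Hv|[H [a [b [HH ->]]]]].
- by apply: Hi1; case: t1 Hv {IH1}.
- by constructor 4; case: t1 Hv {IH1 Hi1} => // t1 _; exists Hole, t1, t2.
- by apply: Hi1; case: t1 Hv {IH1}.
- by constructor 4; exists (CAppL H t2), a, b.
Qed.

Lemma nvP_ES p x u : nvP (pES p x u) =
  if x \in nvP p then sdel x (nvP p) ++ nvT u else nvP p.
Proof. by case: p. Qed.

Lemma anP_ES p x u : anP (pES p x u) =
  if x \notin nvP p then anP p else
  match u with
  | fvar y => if x \in anP p then sdel x (anP p) ++ [:: y] else sdel x (anP p) ++ anT u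
  | _ => sdel x (anP p) ++ anT u end.
Proof. by case: p. Qed.

Lemma unP_ES p x u : unP (pES p x u) =
  if (x \in unP p) || ((x \in nvP p) && ~~ is_var u) then sdel x (unP p) ++ unT u else unP p.
Proof. by case: p. Qed.

Lemma nvP_keep p x u a : a != x -> a \in nvP p -> a \in nvP (pES p x u).
Proof. by move=> ax ap; rewrite nvP_ES; case: ifP => // _; rewrite mem_cat mem_sdel ax ap. Qed.

Lemma anP_keep p x u a : a != x -> a \in anP p -> a \in anP (pES p x u).
Proof.
move=> ax ap; rewrite anP_ES; case: ifP => // _.
by case: u => [n|y|t|t1 t2]; rewrite ?mem_cat ?mem_sdel ?ax ?ap //; case: ifP; rewrite mem_cat mem_sdel ax ap.
Qed.

Lemma unP_keep p x u a : a != x -> a \in unP p -> a \in unP (pES p x u).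
Proof. by move=> ax ap; rewrite unP_ES; case: ifP => // _; rewrite mem_cat mem_sdel ax ap. Qed.

Lemma unP_nv p : {subset unP p <= nvP p}.
Proof.
case: p => t E; rewrite /unP /nvP /=.
elim: E => [|[x u] E IH] /=; first exact: unT_nv.
move=> a; move: (IH a) (IH x) (@unT_nv u a) (@unT_nv u x); bbs a.
Qed.

Lemma anP_nv p : {subset anP p <= nvP p}.
Proof.
case: p => t E; rewrite /anP /nvP /=.
elim: E => [|[x u] E IH] /=; first exact: anT_nv.
move=> a; move: (IH a) (IH x) (@anT_nv u a) (@anT_nv u x).
by case: u => [n|y|t'|t1 t2] /=; bbs a.
Qed.

Lemma gvar_sets x p : gvar x p -> [/\ nvP p = [:: x], anP p = [::] & unP p = [:: x]].
Proof.
elim=> [y|y z q Hg [Hn Ha Hu] Hd|y z t q Hg [Hn Ha Hu] Hne Hd].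
- by [].
- by rewrite nvP_ES anP_ES unP_ES Hn Ha Hu !inE eqxx /= /sdel /= eqxx.
- have Hz : (z \in [:: y]) = false by rewrite inE (negbTE Hne).
  by rewrite nvP_ES anP_ES unP_ES Hn Ha Hu Hz.
Qed.

Lemma uabs_sets p : uabs p -> nvP p = [::] /\ anP p = [::].
Proof.
elim=> [v Hv|x q v Hg Hv Hd|x q t Hu [Hn Ha] Hd].
- by case: v Hv.
- have [Hn Ha _] := gvar_sets Hg.
  rewrite nvP_ES anP_ES Hn Ha inE eqxx /= /sdel /= eqxx /=.
  by case: v Hv.
- by rewrite nvP_ES anP_ES Hn Ha.
Qed.

Lemma gvar_nilE y t : gvar y (t, [::]) -> t = fvar y.
Proof.
move Hq: (t, [::]) => q H; case: H Hq.
- by move=> z [->].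
- by move=> z w q' _ _ /pES_nil.
- by move=> z w u q' _ _ _ /pES_nil.
Qed.

Lemma uabs_nilE t : uabs (t, [::]) -> is_val t.
Proof.
move Hq: (t, [::]) => q H; case: H Hq.
- by move=> v Hv [->].
- by move=> z q' v _ _ _ /pES_nil.
- by move=> z q' u _ _ /pES_nil.
Qed.

Lemma uinert_nilE t : uinert (t, [::]) -> is_inert_plus t.
Proof.
move Hq: (t, [::]) => q H; case: H Hq.
- by move=> i Hi [->].
- by move=> ??????/pES_nil.
- by move=> ???????/pES_nil.
- by move=> ????????/pES_nil.
- by move=> ??????/pES_nil.
Qed.

Lemma gvar_consE y p x u : gvar y (pES p x u) ->
  (u = fvar y /\ gvar x p /\ x \notin dom p) \/ (gvar y p /\ x != y /\ x \notin dom p).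
Proof.
move Hq: (pES p x u) => q H; case: H Hq.
- by move=> z /esym /pES_nil.
- by move=> z w q' Hg Hd /pES_inj [-> -> ->]; left.
- by move=> z w t q' Hg Hne Hd /pES_inj [-> -> ->]; right.
Qed.

Lemma uabs_consE p x u : uabs (pES p x u) -> (gvar x p /\ is_val u) \/ uabs p.
Proof.
move Hq: (pES p x u) => q H; case: H Hq.
- by move=> v _ /esym /pES_nil.
- by move=> z q' v Hg Hv Hd /pES_inj [-> -> ->]; left.
- by move=> z q' t Hu Hd /pES_inj [-> -> ->]; right.
Qed.

Lemma uinert_consE p x u : uinert (pES p x u) ->
  [\/ gvar x p /\ is_inert_plus u,
      [/\ uinert p, x \in nvP p & is_inert u],
      [/\ uinert p, x \in unP p, x \notin anP p & is_val u]
    | uinert p /\ x \notin nvP p].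
Proof.
move Hq: (pES p x u) => q H; case: H Hq.
- by move=> i _ /esym /pES_nil.
- by move=> z q' i Hg Hi Hd /pES_inj [-> -> ->]; constructor 1.
- by move=> z q' i Hu Hn Hi Hd /pES_inj [-> -> ->]; constructor 2.
- by move=> z q' v Hu Hn Ha Hv Hd /pES_inj [-> -> ->]; constructor 3.
- by move=> z q' t Hu Hn Hd /pES_inj [-> -> ->]; constructor 4.
Qed.

Lemma unorm_ES p x u : unorm (pES p x u) -> unorm p.
Proof.
case=> [/uinert_consE [[Hg _]|[Hu _ _]|[Hu _ _ _]|[Hu _]]|[/uabs_consE [[Hg _]|Hu]|[y /gvar_consE [[_ [Hg _]]|[Hg _]]]]];
  rewrite /unorm; by eauto.
Qed.

Lemma plug_shape C s : C = Hole \/ exists a b, plugT C s = app a b.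
Proof. by case: C => [|C t|i C]; [left|right; eexists; eexists|right; eexists; eexists]. Qed.

Lemma NV_M P U A : Mctx P U A -> forall y, y \notin pdom P -> y \in nvP (plugt P (fvar y)).
Proof.
elim=> [H HH|P0 U0 A0 x w HM IH Hx Hd|P0 U0 A0 x t HM IH Hx Hd|P0 U0 A0 x i HM IH Hx Hi Hd
  |P0 U0 A0 x v HM IH Hx HxA Hv Hd|P0 U0 A0 x H HM IH Hx HH Hd] y.
- by move=> _; rewrite /= plug_nv.
- rewrite pdom_ES inE negb_or => /andP[yx yd]; rewrite plugt_ES; apply: nvP_keep => //; exact: IH.
- rewrite pdom_ES inE negb_or => /andP[yx yd]; rewrite plugt_ES; apply: nvP_keep => //; exact: IH.
- rewrite pdom_ES inE negb_or => /andP[yx yd]; rewrite plugt_ES; apply: nvP_keep => //; exact: IH.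
- rewrite pdom_ES inE negb_or => /andP[yx yd]; rewrite plugt_ES; apply: nvP_keep => //; exact: IH.
- by move=> _; rewrite plugt_progC nvP_ES (IH x Hd) mem_cat plug_nv orbT.
Qed.

Lemma AN_X P U A : Xctx P U A -> forall y, y \notin pdom P -> y \in anP (plugt P (fvar y)).
Proof.
elim=> [H HH|P0 U0 A0 x H HM Hx HH Hd|P0 U0 A0 x w HX IH Hx Hd|P0 U0 A0 x i HX IH Hx Hi Hd
  |P0 U0 A0 x t HX IH Hx Hd|P0 U0 A0 x v HX IH Hx HxA Hv Hd|P0 U0 A0 x HX IH Hx Hd] y.
- by move=> _; rewrite /= Happ_an.
- move=> _; have Hn := NV_M HM Hd.
  have [a [b E]] := isHapp_app (fvar y) HH.
  have := Happ_an y HH; rewrite E => Hy.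
  by rewrite plugt_progC anP_ES Hn /= E mem_cat Hy orbT.
- rewrite pdom_ES inE negb_or => /andP[yx yd]; rewrite plugt_ES; apply: anP_keep => //; exact: IH.
- rewrite pdom_ES inE negb_or => /andP[yx yd]; rewrite plugt_ES; apply: anP_keep => //; exact: IH.
- rewrite pdom_ES inE negb_or => /andP[yx yd]; rewrite plugt_ES; apply: anP_keep => //; exact: IH.
- rewrite pdom_ES inE negb_or => /andP[yx yd]; rewrite plugt_ES; apply: anP_keep => //; exact: IH.
- move=> _; have Ha := IH x Hd; have Hn := anP_nv Ha.
  by rewrite plugt_progC anP_ES Hn /= Ha mem_cat inE eqxx orbT.
Qed.

Lemma LM P U A : Mctx P U A -> forall s, unorm (plugt P s) -> [|| is_var s, is_val s | is_inert s].
Proof.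
elim=> [H HH|P0 U0 A0 x w HM IH Hx Hd|P0 U0 A0 x t HM IH Hx Hd|P0 U0 A0 x i HM IH Hx Hi Hd
  |P0 U0 A0 x v HM IH Hx HxA Hv Hd|P0 U0 A0 x H HM IH Hx HH Hd] s.
- rewrite /= => Hu.
  case: Hu => [/uinert_nilE|[/uabs_nilE|[y /gvar_nilE]]].
  + rewrite /is_inert_plus; case: (plugT H s) (@H_fireball H s HH) => // a b Hf Hi.
    by case/orP: (Hf Hi) => ->; rewrite ?orbT.
  + by case: (plug_shape H s) => [->|[a [b ->]]] //= ->; rewrite orbT.
  + by case: (plug_shape H s) => [->|[a [b ->]]] //= ->.
- by rewrite plugt_ES => /unorm_ES; apply: IH.
- by rewrite plugt_ES => /unorm_ES; apply: IH.
- by rewrite plugt_ES => /unorm_ES; apply: IH.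
- by rewrite plugt_ES => /unorm_ES; apply: IH.
- have Hn := NV_M HM Hd.
  have Hf : is_inert (plugT H s) -> [|| is_var s, is_val s | is_inert s].
    by move/(@H_fireball H s HH)/orP => [] ->; rewrite ?orbT.
  have Hv : is_val (plugT H s) -> [|| is_var s, is_val s | is_inert s].
    by case: (plug_shape H s) => [->|[a [b ->]]] //= ->; rewrite orbT.
  rewrite plugt_progC; case=> [/uinert_consE [[_ Hi']|[_ _ Hi']|[_ _ _ Hv']|[_ Hn']]|[/uabs_consE [[_ Hv']|Hu]|[y /gvar_consE [[E _]|[Hg [Hne _]]]]]].
  + by apply: Hf; move: Hi'; rewrite /is_inert_plus; case: (plugT H s).
  + exact: Hf.
  + exact: Hv.
  + by rewrite Hn in Hn'.
  + exact: Hv.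
  + by have [Hn0 _] := uabs_sets Hu; rewrite Hn0 in Hn.
  + by case: (plug_shape H s) E => [->|[a [b ->]]] //= ->.
  + have [Hn0 _ _] := gvar_sets Hg; move: Hn; rewrite Hn0 inE => /eqP E.
    by rewrite E eqxx in Hne.
Qed.

Lemma EXT P U A x v : Xctx P U A -> x \notin pdom P -> is_val v ->
  ~ unorm (pES (plugt P (fvar x)) x v).
Proof.
move=> HX Hd Hv.
have Ha := AN_X HX Hd; have Hn := anP_nv Ha.
case=> [/uinert_consE [[Hg _]|[_ _ Hi]|[_ _ Ha' _]|[_ Hn']]|[/uabs_consE [[Hg _]|Hu]|[y /gvar_consE [[E _]|[Hg _]]]]].
- by have [_ Ha0 _] := gvar_sets Hg; rewrite Ha0 in Ha.
- by case: v Hv Hi.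
- by rewrite Ha in Ha'.
- by rewrite Hn in Hn'.
- by have [_ Ha0 _] := gvar_sets Hg; rewrite Ha0 in Ha.
- by have [_ Ha0] := uabs_sets Hu; rewrite Ha0 in Ha.
- by rewrite E in Hv.
- by have [_ Ha0 _] := gvar_sets Hg; rewrite Ha0 in Ha.
Qed.

Lemma XL_hole p x H y v : lookup (progC p x H) y v ->
  scoped (plugt (progC p x H) (fvar y)).2 -> False.
Proof.
case: p => t E /= [Hin|//] /andP[/andP[_ Hall] _].
by have := allP Hall y (In_mem Hin); rewrite plug_fv.
Qed.

Lemma XL P U A : Xctx P U A -> forall y v, lookup P y v -> is_val v ->
  scoped (plugt P (fvar y)).2 -> ~ unorm (plugt P (fvar y)).
Proof.
have Ext : forall P0 U0 A0 x u, Xctx P0 U0 A0 -> x \notin pdom P0 ->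
   (forall y v, lookup P0 y v -> is_val v -> scoped (plugt P0 (fvar y)).2 -> ~ unorm (plugt P0 (fvar y))) ->
   forall y v, lookup (pctxES P0 x u) y v -> is_val v ->
   scoped (plugt (pctxES P0 x u) (fvar y)).2 -> ~ unorm (plugt (pctxES P0 x u) (fvar y)).
  move=> P0 U0 A0 x u HX Hd IH y v /lookup_ES [[-> ->]|Hl] Hv; rewrite plugt_ES.
    by move=> _; apply: EXT HX Hd Hv.
  case: (plugt P0 (fvar y)) (IH y v Hl Hv) => t E /= IH' /andP[_ Hs] /unorm_ES.
  exact: IH'.
elim=> [H HH|P0 U0 A0 x H HM Hx HH Hd|P0 U0 A0 x w HX IH Hx Hd|P0 U0 A0 x i HX IH Hx Hi Hd
  |P0 U0 A0 x t HX IH Hx Hd|P0 U0 A0 x v HX IH Hx HxA Hv Hd|P0 U0 A0 x HX IH Hx Hd].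
- by [].
- by move=> y v Hl _ /(XL_hole Hl).
- exact: Ext HX Hd IH.
- exact: Ext HX Hd IH.
- exact: Ext HX Hd IH.
- exact: Ext HX Hd IH.
- by move=> y v Hl _ /(XL_hole Hl).
Qed.


Lemma pdom_eq P0 s0 P s : plugt P0 s0 = plugt P s -> pdom P0 = pdom P.
Proof. by move=> E; rewrite (pdom_plugt P0 s0) E -pdom_plugt. Qed.

Lemma size_pdom_ES P x u : size (pdom (pctxES P x u)) = (size (pdom P)).+1.
Proof. by rewrite pdom_ES. Qed.

Lemma size_pdom_progC P x H : size (pdom (progC (plugt P (fvar x)) x H)) = (size (pdom P)).+1.
Proof. by rewrite pdom_progC -pdom_plugt. Qed.

Lemma LEFT_M n : forall P U A s x, size (pdom P) < n -> Mctx P U A -> x \in U ++ A -> x \notin pdom P ->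
  exists P0 U0 A0, [/\ Mctx P0 U0 A0, plugt P0 (fvar x) = plugt P s, x \notin U0 ++ A0,
     {subset U0 <= U ++ A} & {subset A0 <= A}].
Proof.
elim: n => [//|n IHn] P U A s x Hs HM.
case: HM Hs => [H HH|P1 U1 A1 z w HM Hz Hd|P1 U1 A1 z t HM Hz Hd|P1 U1 A1 z i HM Hz Hi Hd
  |P1 U1 A1 z v HM Hz HzA Hv Hd|P1 U1 A1 y H HM Hy HH Hd].
-
  move=> _ Hx _.
  have [H0 [HH0 HP HN S1 S2]] := TL_M s HH Hx.
  exists (PC H0 [::]), (unC H0), (anC H0); split => //; first exact: M_base.
  by rewrite /= HP.
-
  rewrite size_pdom_ES ltnS => Hs Hx; rewrite pdom_ES inE negb_or => /andP[xz xd].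
  have [xw|xw] := eqVneq x w.
  + subst w.
    have [P0 [U0 [A0 [HM0 HP0 HN0 S10 S20]]]] := IHn P1 U1 A1 s z Hs HM Hz Hd.
    have Hd0 : z \notin pdom P0 by rewrite (pdom_eq HP0).
    have xd0 : x \notin pdom P0 by rewrite (pdom_eq HP0).
    case: (boolP (x \in U0 ++ A0)) => Hx0.
      have Hs0 : size (pdom P0) < n by rewrite (pdom_eq HP0).
      have [P2 [U2 [A2 [HM2 HP2 HN2 S12 S22]]]] := IHn P0 U0 A0 (fvar z) x Hs0 HM0 Hx0 xd0.
      have Hz2 : z \notin U2 ++ A2.
        move: HN0; apply: contra; rewrite !mem_cat => /orP[/S12|/S22]; rewrite ?mem_cat //.
        by move=> ->; rewrite orbT.
      exists (pctxES P2 z (fvar x)), U2, A2; split => //.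
      * apply: M_gen HM2 Hz2 _; by rewrite (pdom_eq HP2).
      * by rewrite !plugt_ES HP2 HP0.
      * move=> a; move: (S12 a) (S10 a) (S20 a) (S22 a) HN0 Hz; bbs a.
      * move=> a; move: (S12 a) (S10 a) (S20 a) (S22 a) HN0 Hz; bbs a.
    exists (progC (plugt P0 (fvar z)) z Hole), (U0 ++ unC Hole), (A0 ++ anC Hole); split.
    * exact: (@M_hole _ _ _ _ Hole HM0 HN0 isT Hd0).
    * by rewrite plugt_progC plugt_ES HP0.
    * by move: Hx0; rewrite /= !cats0.
    * move=> a; move: (S10 a) (S20 a) HN0 Hz; bbs a.
    * move=> a; move: (S10 a) (S20 a) HN0 Hz; bbs a.
  + have Hx1 : x \in U1 ++ A1 by move: Hx xz xw; bbs x.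
    have [P0 [U0 [A0 [HM0 HP0 HN0 S10 S20]]]] := IHn P1 U1 A1 s x Hs HM Hx1 xd.
    have Hd0 : z \notin pdom P0 by rewrite (pdom_eq HP0).
    case: (boolP (z \in U0 ++ A0)) => Hz0.
      exists (pctxES P0 z (fvar w)), (upd U0 z w), (upd A0 z w); split.
      * exact: M_var HM0 Hz0 Hd0.
      * by rewrite !plugt_ES HP0.
      * by move: HN0 xz xw; bbs x.
      * move=> a; move: (S10 a) (S20 a) (S10 z) (S20 z) Hz0 Hz; bbs a.
      * move=> a; move: (S10 a) (S20 a) (S10 z) (S20 z) Hz0 Hz; bbs a.
    exists (pctxES P0 z (fvar w)), U0, A0; split.
    * exact: M_gen HM0 Hz0 Hd0.
    * by rewrite !plugt_ES HP0.
    * done.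
    * move=> a; move: (S10 a) (S20 a) Hz0 Hz; bbs a.
    * move=> a; move: (S10 a) (S20 a) Hz0 Hz; bbs a.
-
  rewrite size_pdom_ES ltnS => Hs Hx; rewrite pdom_ES inE negb_or => /andP[xz xd].
  have [P0 [U0 [A0 [HM0 HP0 HN0 S10 S20]]]] := IHn P1 U1 A1 s x Hs HM Hx xd.
  have Hd0 : z \notin pdom P0 by rewrite (pdom_eq HP0).
  have Hz0 : z \notin U0 ++ A0 by move: (S10 z) (S20 z) Hz; bbs z.
  exists (pctxES P0 z t), U0, A0; split => //.
  * exact: M_gen HM0 Hz0 Hd0.
  * by rewrite !plugt_ES HP0.
-
  rewrite size_pdom_ES ltnS => Hs Hx; rewrite pdom_ES inE negb_or => /andP[xz xd].
  have Hii : is_inert i by case: i Hi {Hx}.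
  case: (boolP (x \in nvT i)) => Hxi.
  + have [P0 [U0 [A0 [HM0 HP0 HN0 S10 S20]]]] := IHn P1 U1 A1 s z Hs HM Hz Hd.
    have Hd0 : z \notin pdom P0 by rewrite (pdom_eq HP0).
    have xd0 : x \notin pdom P0 by rewrite (pdom_eq HP0).
    case: (boolP (x \in U0 ++ A0)) => Hx0.
      have Hs0 : size (pdom P0) < n by rewrite (pdom_eq HP0).
      have [P2 [U2 [A2 [HM2 HP2 HN2 S12 S22]]]] := IHn P0 U0 A0 (fvar z) x Hs0 HM0 Hx0 xd0.
      have Hz2 : z \notin U2 ++ A2 by move: (S12 z) (S22 z) HN0; bbs z.
      exists (pctxES P2 z i), U2, A2; split => //.
      * apply: M_gen HM2 Hz2 _; by rewrite (pdom_eq HP2).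
      * by rewrite !plugt_ES HP2 HP0.
      * move=> a; move: (S12 a) (S10 a) (S20 a) (S22 a) HN0 Hz; bbs a.
      * move=> a; move: (S12 a) (S10 a) (S20 a) (S22 a) HN0 Hz; bbs a.
    have [Hi0 [HH0 HPi HNi]] := TL_I Hii Hxi.
    have SU := @unC_sub Hi0 (fvar x); have SA := @anC_sub Hi0 (fvar x).
    rewrite HPi in SU SA.
    exists (progC (plugt P0 (fvar z)) z Hi0), (U0 ++ unC Hi0), (A0 ++ anC Hi0); split.
    * exact: M_hole HM0 HN0 HH0 Hd0.
    * by rewrite plugt_progC plugt_ES HP0 HPi.
    * by move: Hx0 HNi; bbs x.
    * move=> a; move: (S10 a) (S20 a) (SU a) (SA a) HN0 Hz; bbs a.
    * move=> a; move: (S10 a) (S20 a) (SU a) (SA a) HN0 Hz; bbs a.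
  + have Hxu := @unT_nv i x; have Hxa := @anT_nv i x.
    have Hx1 : x \in U1 ++ A1 by move: Hx xz Hxi Hxu Hxa; bbs x.
    have [P0 [U0 [A0 [HM0 HP0 HN0 S10 S20]]]] := IHn P1 U1 A1 s x Hs HM Hx1 xd.
    have Hd0 : z \notin pdom P0 by rewrite (pdom_eq HP0).
    case: (boolP (z \in U0 ++ A0)) => Hz0.
      exists (pctxES P0 z i), (sdel z U0 ++ unT i), (sdel z A0 ++ anT i); split.
      * exact: M_inert HM0 Hz0 Hi Hd0.
      * by rewrite !plugt_ES HP0.
      * by move: HN0 xz Hxi Hxu Hxa; bbs x.
      * move=> a; move: (S10 a) (S20 a) Hz0 Hz; bbs a.
      * move=> a; move: (S10 a) (S20 a) Hz0 Hz; bbs a.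
    exists (pctxES P0 z i), U0, A0; split.
    * exact: M_gen HM0 Hz0 Hd0.
    * by rewrite !plugt_ES HP0.
    * done.
    * move=> a; move: (S10 a) (S20 a) Hz0 Hz; bbs a.
    * move=> a; move: (S10 a) (S20 a) Hz0 Hz; bbs a.
-
  rewrite size_pdom_ES ltnS => Hs Hx; rewrite pdom_ES inE negb_or => /andP[xz xd].
  have Hx1 : x \in U1 ++ A1 by move: Hx xz; bbs x.
  have [P0 [U0 [A0 [HM0 HP0 HN0 S10 S20]]]] := IHn P1 U1 A1 s x Hs HM Hx1 xd.
  have Hd0 : z \notin pdom P0 by rewrite (pdom_eq HP0).
  case: (boolP (z \in U0 ++ A0)) => Hz0.
    have HzU : z \in U0 by move: Hz0 (S20 z) HzA; bbs z.
    have HzA0 : z \notin A0 by move: (S20 z) HzA; bbs z.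
    exists (pctxES P0 z v), (sdel z U0), A0; split.
    * exact: M_val HM0 HzU HzA0 Hv Hd0.
    * by rewrite !plugt_ES HP0.
    * by move: HN0 xz; bbs x.
    * move=> a; move: (S10 a) (S20 a) HzA; bbs a.
    * move=> a; move: (S10 a) (S20 a) HzA; bbs a.
  exists (pctxES P0 z v), U0, A0; split.
  * exact: M_gen HM0 Hz0 Hd0.
  * by rewrite !plugt_ES HP0.
  * done.
  * move=> a; move: (S10 a) (S20 a) Hz0 HzA; bbs a.
  * move=> a; move: (S10 a) (S20 a) Hz0 HzA; bbs a.
-
  rewrite size_pdom_progC ltnS => Hs Hx; rewrite pdom_progC inE negb_or -pdom_plugt => /andP[xy xd].
  case: (boolP (x \in U1 ++ A1)) => Hx1.
    have [P0 [U0 [A0 [HM0 HP0 HN0 S10 S20]]]] := IHn P1 U1 A1 (fvar y) x Hs HM Hx1 xd.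
    have Hd0 : y \notin pdom P0 by rewrite (pdom_eq HP0).
    have Hy0 : y \notin U0 ++ A0 by move: (S10 y) (S20 y) Hy; bbs y.
    exists (pctxES P0 y (plugT H s)), U0, A0; split => //.
    * exact: M_gen HM0 Hy0 Hd0.
    * by rewrite plugt_ES plugt_progC HP0.
    * move=> a; move: (S10 a) (S20 a); bbs a.
    * move=> a; move: (S10 a) (S20 a); bbs a.
  have HxH : x \in unC H ++ anC H by move: Hx Hx1; bbs x.
  have [H0 [HH0 HPH HNH SH1 SH2]] := TL_M s HH HxH.
  exists (progC (plugt P1 (fvar y)) y H0), (U1 ++ unC H0), (A1 ++ anC H0); split.
  * exact: M_hole HM Hy HH0 Hd.
  * by rewrite !plugt_progC HPH.
  * by move: Hx1 HNH; bbs x.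
  * move=> a; move: (SH1 a) (SH2 a); bbs a.
  * move=> a; move: (SH1 a) (SH2 a); bbs a.
Qed.


Lemma lookup_new P x u : lookup (pctxES P x u) x u.
Proof. by case: P => [C E|t E1 y C E2] /=; [left|right; left]. Qed.

Lemma LEFT_M' P U A s x : Mctx P U A -> x \in U ++ A -> x \notin pdom P ->
  exists P0 U0 A0, [/\ Mctx P0 U0 A0, plugt P0 (fvar x) = plugt P s, x \notin U0 ++ A0,
     {subset U0 <= U ++ A} & {subset A0 <= A}].
Proof. exact: (@LEFT_M (size (pdom P)).+1 P U A s x (ltnSn _)). Qed.

Lemma inertp_notval i : is_inert_plus i -> ~~ is_val i. Proof. by case: i. Qed.
Lemma inertp_inert i : is_inert_plus i -> is_inert i. Proof. by case: i. Qed.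

Definition HVp P h := forall u, lookup P h u -> is_val u.

Lemma HV_ES P x u h : HVp (pctxES P x u) h -> HVp P h.
Proof. by move=> H w /(lookup_ES' x u) /H. Qed.

Lemma HV_neq P x u h : HVp (pctxES P x u) h -> ~~ is_val u -> x != h.
Proof. by move=> H Hu; apply/eqP => E; subst h; move: (H u (lookup_new P x u)); rewrite (negbTE Hu). Qed.

Lemma HV_fresh P h : h \notin pdom P -> HVp P h.
Proof. by move=> Hd u /lookup_pdom Hl; rewrite Hl in Hd. Qed.

Lemma LEFT_Xin n : forall P U A h x, size (pdom P) < n -> Xctx P U A -> HVp P h ->
  x \in U ++ A -> x \notin pdom P -> x != h ->
  exists P0 U0 A0, [/\ Mctx P0 U0 A0, plugt P0 (fvar x) = plugt P (fvar h), x \notin U0 ++ A0,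
     {subset U0 <= U ++ A ++ [:: h]} & {subset A0 <= A}].
Proof.
elim: n => [//|n IHn] P U A h x Hs HX.
case: HX Hs => [H HH|P1 U1 A1 y H HM Hy HH Hd|P1 U1 A1 z w HX Hz Hd|P1 U1 A1 z i HX Hz Hi Hd
  |P1 U1 A1 z t HX Hz Hd|P1 U1 A1 z v HX Hz HzA Hv Hd|P1 U1 A1 z HX HzA Hd].
-
  move=> _ _ Hx _ _.
  have [H0 [HH0 HP HN S1 S2]] := TL_M (fvar h) (isHapp_isH HH) Hx.
  exists (PC H0 [::]), (unC H0), (anC H0); split => //; first exact: M_base.
  + by rewrite /= HP.
  + move=> a; move: (S1 a); bbs a.
-
  rewrite size_pdom_progC ltnS => Hs HV Hx; rewrite pdom_progC inE negb_or -pdom_plugt => /andP[xy xd] xh.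
  case: (boolP (x \in U1 ++ A1)) => Hx1.
    have [P0 [U0 [A0 [HM0 HP0 HN0 S10 S20]]]] := LEFT_M' (fvar y) HM Hx1 xd.
    have Hd0 : y \notin pdom P0 by rewrite (pdom_eq HP0).
    have Hy0 : y \notin U0 ++ A0 by move: (S10 y) (S20 y) Hy; bbs y.
    exists (pctxES P0 y (plugT H (fvar h))), U0, A0; split => //.
    * exact: M_gen HM0 Hy0 Hd0.
    * by rewrite plugt_ES plugt_progC HP0.
    * move=> a; move: (S10 a) (S20 a) Hy; bbs a.
    * move=> a; move: (S10 a) (S20 a); bbs a.
  have HxH : x \in unC H ++ anC H by move: Hx Hx1; bbs x.
  have [H0 [HH0 HPH HNH SH1 SH2]] := TL_M (fvar h) (isHapp_isH HH) HxH.
  exists (progC (plugt P1 (fvar y)) y H0), (U1 ++ unC H0), (A1 ++ anC H0); split.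
  * exact: M_hole HM Hy HH0 Hd.
  * by rewrite !plugt_progC HPH.
  * by move: Hx1 HNH; bbs x.
  * move=> a; move: (SH1 a) (SH2 a) Hy; bbs a.
  * move=> a; move: (SH1 a) (SH2 a); bbs a.
-
  rewrite size_pdom_ES ltnS => Hs HV Hx; rewrite pdom_ES inE negb_or => /andP[xz xd] xh.
  have zh : z != h by apply: HV_neq HV _.
  have HV1 := HV_ES HV.
  have [xw|xw] := eqVneq x w.
  + subst w.
    have [P0 [U0 [A0 [HM0 HP0 HN0 S10 S20]]]] := IHn P1 U1 A1 h z Hs HX HV1 Hz Hd zh.
    have Hd0 : z \notin pdom P0 by rewrite (pdom_eq HP0).
    have xd0 : x \notin pdom P0 by rewrite (pdom_eq HP0).
    case: (boolP (x \in U0 ++ A0)) => Hx0.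
      have [P2 [U2 [A2 [HM2 HP2 HN2 S12 S22]]]] := LEFT_M' (fvar z) HM0 Hx0 xd0.
      have Hz2 : z \notin U2 ++ A2 by move: (S12 z) (S22 z) HN0; bbs z.
      exists (pctxES P2 z (fvar x)), U2, A2; split => //.
      * apply: M_gen HM2 Hz2 _; by rewrite (pdom_eq HP2).
      * by rewrite !plugt_ES HP2 HP0.
      * move=> a; move: (S12 a) (S10 a) (S20 a) (S22 a) HN0 Hz; bbs a.
      * move=> a; move: (S12 a) (S10 a) (S20 a) (S22 a) HN0 Hz; bbs a.
    exists (progC (plugt P0 (fvar z)) z Hole), (U0 ++ unC Hole), (A0 ++ anC Hole); split.
    * exact: (@M_hole _ _ _ _ Hole HM0 HN0 isT Hd0).
    * by rewrite plugt_progC plugt_ES HP0.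
    * by move: Hx0; rewrite /= !cats0.
    * move=> a; move: (S10 a) (S20 a) HN0 Hz; bbs a.
    * move=> a; move: (S10 a) (S20 a) HN0 Hz; bbs a.
  + have Hx1 : x \in U1 ++ A1 by move: Hx xz xw; bbs x.
    have [P0 [U0 [A0 [HM0 HP0 HN0 S10 S20]]]] := IHn P1 U1 A1 h x Hs HX HV1 Hx1 xd xh.
    have Hd0 : z \notin pdom P0 by rewrite (pdom_eq HP0).
    case: (boolP (z \in U0 ++ A0)) => Hz0.
      exists (pctxES P0 z (fvar w)), (upd U0 z w), (upd A0 z w); split.
      * exact: M_var HM0 Hz0 Hd0.
      * by rewrite !plugt_ES HP0.
      * by move: HN0 xz xw; bbs x.
      * move=> a; move: (S10 a) (S20 a) (S10 z) (S20 z) Hz0 Hz zh; bbs a.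
      * move=> a; move: (S10 a) (S20 a) (S10 z) (S20 z) Hz0 Hz zh; bbs a.
    exists (pctxES P0 z (fvar w)), U0, A0; split.
    * exact: M_gen HM0 Hz0 Hd0.
    * by rewrite !plugt_ES HP0.
    * done.
    * move=> a; move: (S10 a) (S20 a) Hz0 Hz; bbs a.
    * move=> a; move: (S10 a) (S20 a) Hz0 Hz; bbs a.
-
  rewrite size_pdom_ES ltnS => Hs HV Hx; rewrite pdom_ES inE negb_or => /andP[xz xd] xh.
  have Hnv := inertp_notval Hi.
  have zh : z != h by apply: HV_neq HV Hnv.
  have HV1 := HV_ES HV.
  have Hii := inertp_inert Hi.
  case: (boolP (x \in nvT i)) => Hxi.
  + have [P0 [U0 [A0 [HM0 HP0 HN0 S10 S20]]]] := IHn P1 U1 A1 h z Hs HX HV1 Hz Hd zh.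
    have Hd0 : z \notin pdom P0 by rewrite (pdom_eq HP0).
    have xd0 : x \notin pdom P0 by rewrite (pdom_eq HP0).
    case: (boolP (x \in U0 ++ A0)) => Hx0.
      have [P2 [U2 [A2 [HM2 HP2 HN2 S12 S22]]]] := LEFT_M' (fvar z) HM0 Hx0 xd0.
      have Hz2 : z \notin U2 ++ A2 by move: (S12 z) (S22 z) HN0; bbs z.
      exists (pctxES P2 z i), U2, A2; split => //.
      * apply: M_gen HM2 Hz2 _; by rewrite (pdom_eq HP2).
      * by rewrite !plugt_ES HP2 HP0.
      * move=> a; move: (S12 a) (S10 a) (S20 a) (S22 a) HN0 Hz; bbs a.
      * move=> a; move: (S12 a) (S10 a) (S20 a) (S22 a) HN0 Hz; bbs a.
    have [Hi0 [HH0 HPi HNi]] := TL_I Hii Hxi.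
    have SU := @unC_sub Hi0 (fvar x); have SA := @anC_sub Hi0 (fvar x).
    rewrite HPi in SU SA.
    exists (progC (plugt P0 (fvar z)) z Hi0), (U0 ++ unC Hi0), (A0 ++ anC Hi0); split.
    * exact: M_hole HM0 HN0 HH0 Hd0.
    * by rewrite plugt_progC plugt_ES HP0 HPi.
    * by move: Hx0 HNi; bbs x.
    * move=> a; move: (S10 a) (S20 a) (SU a) (SA a) HN0 Hz; bbs a.
    * move=> a; move: (S10 a) (S20 a) (SU a) (SA a) HN0 Hz; bbs a.
  + have Hxu := @unT_nv i x; have Hxa := @anT_nv i x.
    have Hx1 : x \in U1 ++ A1 by move: Hx xz Hxi Hxu Hxa; bbs x.
    have [P0 [U0 [A0 [HM0 HP0 HN0 S10 S20]]]] := IHn P1 U1 A1 h x Hs HX HV1 Hx1 xd xh.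
    have Hd0 : z \notin pdom P0 by rewrite (pdom_eq HP0).
    case: (boolP (z \in U0 ++ A0)) => Hz0.
      exists (pctxES P0 z i), (sdel z U0 ++ unT i), (sdel z A0 ++ anT i); split.
      * exact: M_inert HM0 Hz0 Hi Hd0.
      * by rewrite !plugt_ES HP0.
      * by move: HN0 xz Hxi Hxu Hxa; bbs x.
      * move=> a; move: (S10 a) (S20 a) Hz0 Hz zh; bbs a.
      * move=> a; move: (S10 a) (S20 a) Hz0 Hz; bbs a.
    exists (pctxES P0 z i), U0, A0; split.
    * exact: M_gen HM0 Hz0 Hd0.
    * by rewrite !plugt_ES HP0.
    * done.
    * move=> a; move: (S10 a) (S20 a) Hz0 Hz; bbs a.
    * move=> a; move: (S10 a) (S20 a) Hz0 Hz; bbs a.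
-
  rewrite size_pdom_ES ltnS => Hs HV Hx; rewrite pdom_ES inE negb_or => /andP[xz xd] xh.
  have HV1 := HV_ES HV.
  have [P0 [U0 [A0 [HM0 HP0 HN0 S10 S20]]]] := IHn P1 U1 A1 h x Hs HX HV1 Hx xd xh.
  have Hd0 : z \notin pdom P0 by rewrite (pdom_eq HP0).
  case: (boolP (z \in U0 ++ A0)) => Hz0.
    have zh : z = h by apply/eqP; move: Hz0 (S10 z) (S20 z) Hz; bbs z.
    subst h.
    have Ht : is_val t := HV t (lookup_new P1 z t).
    have HzU : z \in U0 by move: Hz0 (S20 z) Hz; bbs z.
    have HzA0 : z \notin A0 by move: (S20 z) Hz; bbs z.
    exists (pctxES P0 z t), (sdel z U0), A0; split.
    * exact: M_val HM0 HzU HzA0 Ht Hd0.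
    * by rewrite !plugt_ES HP0.
    * by move: HN0 xz; bbs x.
    * move=> a; move: (S10 a) (S20 a); bbs a.
    * move=> a; move: (S10 a) (S20 a); bbs a.
  exists (pctxES P0 z t), U0, A0; split.
  * exact: M_gen HM0 Hz0 Hd0.
  * by rewrite !plugt_ES HP0.
  * done.
  * move=> a; move: (S10 a) (S20 a); bbs a.
  * move=> a; move: (S10 a) (S20 a); bbs a.
-
  rewrite size_pdom_ES ltnS => Hs HV Hx; rewrite pdom_ES inE negb_or => /andP[xz xd] xh.
  have HV1 := HV_ES HV.
  have Hx1 : x \in U1 ++ A1 by move: Hx xz; bbs x.
  have [P0 [U0 [A0 [HM0 HP0 HN0 S10 S20]]]] := IHn P1 U1 A1 h x Hs HX HV1 Hx1 xd xh.
  have Hd0 : z \notin pdom P0 by rewrite (pdom_eq HP0).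
  case: (boolP (z \in U0 ++ A0)) => Hz0.
    have HzU : z \in U0 by move: Hz0 (S20 z) HzA; bbs z.
    have HzA0 : z \notin A0 by move: (S20 z) HzA; bbs z.
    exists (pctxES P0 z v), (sdel z U0), A0; split.
    * exact: M_val HM0 HzU HzA0 Hv Hd0.
    * by rewrite !plugt_ES HP0.
    * by move: HN0 xz; bbs x.
    * move=> a; move: (S10 a) (S20 a) HzA; bbs a.
    * move=> a; move: (S10 a) (S20 a) HzA; bbs a.
  exists (pctxES P0 z v), U0, A0; split.
  * exact: M_gen HM0 Hz0 Hd0.
  * by rewrite !plugt_ES HP0.
  * done.
  * move=> a; move: (S10 a) (S20 a) Hz0 HzA; bbs a.
  * move=> a; move: (S10 a) (S20 a) Hz0 HzA; bbs a.
-
  rewrite size_pdom_progC ltnS => Hs HV Hx; rewrite pdom_progC inE negb_or -pdom_plugt => /andP[xz xd] xh.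
  have HV1 : HVp P1 z := HV_fresh Hd.
  have Hx1 : x \in U1 ++ A1 by move: Hx xz; bbs x.
  have [P0 [U0 [A0 [HM0 HP0 HN0 S10 S20]]]] := IHn P1 U1 A1 z x Hs HX HV1 Hx1 xd xz.
  have Hd0 : z \notin pdom P0 by rewrite (pdom_eq HP0).
  case: (boolP (z \in U0 ++ A0)) => Hz0.
    exists (pctxES P0 z (fvar h)), (upd U0 z h), (upd A0 z h); split.
    * exact: M_var HM0 Hz0 Hd0.
    * by rewrite plugt_ES plugt_progC HP0.
    * by move: HN0 xh xz; bbs x.
    * move=> a; move: (S10 a) (S20 a) (S20 z) HzA; bbs a.
    * move=> a; move: (S10 a) (S20 a) (S20 z) HzA; bbs a.
  exists (pctxES P0 z (fvar h)), U0, A0; split.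
  * exact: M_gen HM0 Hz0 Hd0.
  * by rewrite plugt_ES plugt_progC HP0.
  * done.
  * move=> a; move: (S10 a) (S20 a) Hz0 HzA; bbs a.
  * move=> a; move: (S10 a) (S20 a) Hz0 HzA; bbs a.
Qed.


Lemma LEFT_Xin' P U A h x : Xctx P U A -> HVp P h ->
  x \in U ++ A -> x \notin pdom P -> x != h ->
  exists P0 U0 A0, [/\ Mctx P0 U0 A0, plugt P0 (fvar x) = plugt P (fvar h), x \notin U0 ++ A0,
     {subset U0 <= U ++ A ++ [:: h]} & {subset A0 <= A}].
Proof. exact: (@LEFT_Xin (size (pdom P)).+1 P U A h x (ltnSn _)). Qed.

Lemma LEFTX n :
 (forall P U A s x, size (pdom P) < n -> Mctx P U A -> x \in A -> x \notin pdom P ->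
   exists P0 U0 A0, [/\ Xctx P0 U0 A0, plugt P0 (fvar x) = plugt P s, x \notin A0,
      {subset U0 <= U ++ A} & {subset A0 <= A}])
 /\ (forall P U A h x, size (pdom P) < n -> Xctx P U A -> HVp P h -> x \in A -> x \notin pdom P -> x != h ->
   exists P0 U0 A0, [/\ Xctx P0 U0 A0, plugt P0 (fvar x) = plugt P (fvar h), x \notin A0,
      {subset U0 <= U ++ A ++ [:: h]} & {subset A0 <= A}]).
Proof.
elim: n => [|n [IHM IHX]]; first by split.
split.
{ move=> P U A s x Hs HM.
case: HM Hs => [H HH|P1 U1 A1 z w HM Hz Hd|P1 U1 A1 z t HM Hz Hd|P1 U1 A1 z i HM Hz Hi Hd
  |P1 U1 A1 z v HM Hz HzA Hv Hd|P1 U1 A1 y H HM Hy HH Hd].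
-
  move=> _ Hx _.
  have [H0 [HH0 HP HN S1 S2]] := TL_MA s HH Hx.
  exists (PC H0 [::]), (unC H0), (anC H0); split => //; first exact: X_base.
  by rewrite /= HP.
-
  rewrite size_pdom_ES ltnS => Hs Hx; rewrite pdom_ES inE negb_or => /andP[xz xd].
  case: (boolP ((x == w) && (z \in A1))) => Hc.
  + case/andP: Hc => /eqP xw HzA; subst w.
    have [P0 [U0 [A0 [HX0 HP0 HN0 S10 S20]]]] := IHM P1 U1 A1 s z Hs HM HzA Hd.
    have Hd0 : z \notin pdom P0 by rewrite (pdom_eq HP0).
    have xd0 : x \notin pdom P0 by rewrite (pdom_eq HP0).
    case: (boolP (x \in A0)) => Hx0.
      have Hs0 : size (pdom P0) < n by rewrite (pdom_eq HP0).
      have [P2 [U2 [A2 [HX2 HP2 HN2 S12 S22]]]] := IHX P0 U0 A0 z x Hs0 HX0 (HV_fresh Hd0) Hx0 xd0 xz.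
      have Hd2 : z \notin pdom P2 by rewrite (pdom_eq HP2).
      have zA2 : z \notin A2 by move: (S22 z) HN0; bbs z.
      case: (boolP (z \in U2 ++ A2)) => Hz2.
        exists (pctxES P2 z (fvar x)), (upd U2 z x), (upd A2 z x); split.
        * exact: X_var HX2 Hz2 Hd2.
        * by rewrite !plugt_ES HP2 HP0.
        * by move: HN2 zA2; bbs x.
        * move=> a; move: (S12 a) (S10 a) (S20 a) (S22 a) HN0 HzA zA2; bbs a.
        * move=> a; move: (S12 a) (S10 a) (S20 a) (S22 a) HN0 HzA zA2; bbs a.
      exists (pctxES P2 z (fvar x)), U2, A2; split => //.
      * exact: X_gen HX2 Hz2 Hd2.
      * by rewrite !plugt_ES HP2 HP0.
      * move=> a; move: (S12 a) (S10 a) (S20 a) (S22 a) HN0 HzA Hz2; bbs a.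
      * move=> a; move: (S12 a) (S10 a) (S20 a) (S22 a) HN0 HzA Hz2; bbs a.
    exists (progC (plugt P0 (fvar z)) z Hole), (sdel z U0), A0; split => //.
    * exact: X_hole HX0 HN0 Hd0.
    * by rewrite plugt_progC plugt_ES HP0.
    * move=> a; move: (S10 a) (S20 a) HN0 HzA; bbs a.
    * move=> a; move: (S10 a) (S20 a) HN0 HzA; bbs a.
  + have Hx1 : x \in A1 by move: Hx xz Hc; bbs x.
    have [P0 [U0 [A0 [HX0 HP0 HN0 S10 S20]]]] := IHM P1 U1 A1 s x Hs HM Hx1 xd.
    have Hd0 : z \notin pdom P0 by rewrite (pdom_eq HP0).
    case: (boolP (z \in U0 ++ A0)) => Hz0.
      exists (pctxES P0 z (fvar w)), (upd U0 z w), (upd A0 z w); split.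
      * exact: X_var HX0 Hz0 Hd0.
      * by rewrite !plugt_ES HP0.
      * by move: HN0 xz Hc (S20 z); bbs x.
      * move=> a; move: (S10 a) (S20 a) (S10 z) (S20 z) Hz0 Hz; bbs a.
      * move=> a; move: (S10 a) (S20 a) (S10 z) (S20 z) Hz0 Hz; bbs a.
    exists (pctxES P0 z (fvar w)), U0, A0; split => //.
    * exact: X_gen HX0 Hz0 Hd0.
    * by rewrite !plugt_ES HP0.
    * move=> a; move: (S10 a) (S20 a) Hz0 Hz; bbs a.
    * move=> a; move: (S10 a) (S20 a) Hz0 Hz; bbs a.
-
  rewrite size_pdom_ES ltnS => Hs Hx; rewrite pdom_ES inE negb_or => /andP[xz xd].
  have [P0 [U0 [A0 [HX0 HP0 HN0 S10 S20]]]] := IHM P1 U1 A1 s x Hs HM Hx xd.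
  have Hd0 : z \notin pdom P0 by rewrite (pdom_eq HP0).
  have Hz0 : z \notin U0 ++ A0 by move: (S10 z) (S20 z) Hz; bbs z.
  exists (pctxES P0 z t), U0, A0; split => //.
  * exact: X_gen HX0 Hz0 Hd0.
  * by rewrite !plugt_ES HP0.
-
  rewrite size_pdom_ES ltnS => Hs Hx; rewrite pdom_ES inE negb_or => /andP[xz xd].
  have Hii := inertp_inert Hi.
  case: (boolP (x \in anT i)) => Hxi.
  + have [P0 [U0 [A0 [HM0 HP0 HN0 S10 S20]]]] := LEFT_M' s HM Hz Hd.
    have Hd0 : z \notin pdom P0 by rewrite (pdom_eq HP0).
    have xd0 : x \notin pdom P0 by rewrite (pdom_eq HP0).
    case: (boolP (x \in A0)) => Hx0.
      have Hs0 : size (pdom P0) < n by rewrite (pdom_eq HP0).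
      have [P2 [U2 [A2 [HX2 HP2 HN2 S12 S22]]]] := IHM P0 U0 A0 (fvar z) x Hs0 HM0 Hx0 xd0.
      have Hz2 : z \notin U2 ++ A2 by move: (S12 z) (S22 z) HN0; bbs z.
      exists (pctxES P2 z i), U2, A2; split => //.
      * apply: X_gen HX2 Hz2 _; by rewrite (pdom_eq HP2).
      * by rewrite !plugt_ES HP2 HP0.
      * move=> a; move: (S12 a) (S10 a) (S20 a) (S22 a) HN0 Hz; bbs a.
      * move=> a; move: (S12 a) (S10 a) (S20 a) (S22 a) HN0 Hz; bbs a.
    have [Hi0 [HH0 HPi HNi]] := TL_IA Hii Hxi.
    have SU := @unC_sub Hi0 (fvar x); have SA := @anC_sub Hi0 (fvar x).
    rewrite HPi in SU SA.
    exists (progC (plugt P0 (fvar z)) z Hi0), (sdel z U0 ++ unC Hi0), (A0 ++ anC Hi0); split.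
    * exact: X_holeM HM0 HN0 HH0 Hd0.
    * by rewrite plugt_progC plugt_ES HP0 HPi.
    * by move: Hx0 HNi; bbs x.
    * move=> a; move: (S10 a) (S20 a) (SU a) (SA a) HN0 Hz; bbs a.
    * move=> a; move: (S10 a) (S20 a) (SU a) (SA a) HN0 Hz; bbs a.
  + have Hx1 : x \in A1 by move: Hx xz Hxi; bbs x.
    have [P0 [U0 [A0 [HX0 HP0 HN0 S10 S20]]]] := IHM P1 U1 A1 s x Hs HM Hx1 xd.
    have Hd0 : z \notin pdom P0 by rewrite (pdom_eq HP0).
    case: (boolP (z \in U0 ++ A0)) => Hz0.
      exists (pctxES P0 z i), (sdel z U0 ++ unT i), (sdel z A0 ++ anT i); split.
      * exact: X_inert HX0 Hz0 Hi Hd0.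
      * by rewrite !plugt_ES HP0.
      * by move: HN0 xz Hxi; bbs x.
      * move=> a; move: (S10 a) (S20 a) Hz0 Hz; bbs a.
      * move=> a; move: (S10 a) (S20 a) Hz0 Hz; bbs a.
    exists (pctxES P0 z i), U0, A0; split => //.
    * exact: X_gen HX0 Hz0 Hd0.
    * by rewrite !plugt_ES HP0.
    * move=> a; move: (S10 a) (S20 a) Hz0 Hz; bbs a.
    * move=> a; move: (S10 a) (S20 a) Hz0 Hz; bbs a.
-
  rewrite size_pdom_ES ltnS => Hs Hx; rewrite pdom_ES inE negb_or => /andP[xz xd].
  have [P0 [U0 [A0 [HX0 HP0 HN0 S10 S20]]]] := IHM P1 U1 A1 s x Hs HM Hx xd.
  have Hd0 : z \notin pdom P0 by rewrite (pdom_eq HP0).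
  case: (boolP (z \in U0 ++ A0)) => Hz0.
    have HzU : z \in U0 by move: Hz0 (S20 z) HzA; bbs z.
    have HzA0 : z \notin A0 by move: (S20 z) HzA; bbs z.
    exists (pctxES P0 z v), (sdel z U0), A0; split => //.
    * exact: X_val HX0 HzU HzA0 Hv Hd0.
    * by rewrite !plugt_ES HP0.
    * move=> a; move: (S10 a) (S20 a) HzA; bbs a.
  exists (pctxES P0 z v), U0, A0; split => //.
  * exact: X_gen HX0 Hz0 Hd0.
  * by rewrite !plugt_ES HP0.
  * move=> a; move: (S10 a) (S20 a) Hz0 HzA; bbs a.
-
  rewrite size_pdom_progC ltnS => Hs Hx; rewrite pdom_progC inE negb_or -pdom_plugt => /andP[xy xd].
  case: (boolP (x \in A1)) => Hx1.
    have [P0 [U0 [A0 [HX0 HP0 HN0 S10 S20]]]] := IHM P1 U1 A1 (fvar y) x Hs HM Hx1 xd.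
    have Hd0 : y \notin pdom P0 by rewrite (pdom_eq HP0).
    have Hy0 : y \notin U0 ++ A0 by move: (S10 y) (S20 y) Hy; bbs y.
    exists (pctxES P0 y (plugT H s)), U0, A0; split => //.
    * exact: X_gen HX0 Hy0 Hd0.
    * by rewrite plugt_ES plugt_progC HP0.
    * move=> a; move: (S10 a) (S20 a); bbs a.
    * move=> a; move: (S10 a) (S20 a); bbs a.
  have HxH : x \in anC H by move: Hx Hx1; bbs x.
  have [H0 [HH0 HPH HNH SH1 SH2]] := TL_MA s HH HxH.
  exists (progC (plugt P1 (fvar y)) y H0), (sdel y U1 ++ unC H0), (A1 ++ anC H0); split.
  * exact: X_holeM HM Hy HH0 Hd.
  * by rewrite !plugt_progC HPH.
  * by move: Hx1 HNH; bbs x.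
  * move=> a; move: (SH1 a) (SH2 a); bbs a.
  * move=> a; move: (SH1 a) (SH2 a); bbs a. }
move=> P U A h x Hs HX.
case: HX Hs => [H HH|P1 U1 A1 y H HM Hy HH Hd|P1 U1 A1 z w HX Hz Hd|P1 U1 A1 z i HX Hz Hi Hd
  |P1 U1 A1 z t HX Hz Hd|P1 U1 A1 z v HX Hz HzA Hv Hd|P1 U1 A1 z HX HzA Hd].
-
  move=> _ _ Hx _ _.
  have [H0 [HH0 HP HN S1 S2]] := TL_MA (fvar h) (isHapp_isH HH) Hx.
  exists (PC H0 [::]), (unC H0), (anC H0); split => //; first exact: X_base.
  + by rewrite /= HP.
  + move=> a; move: (S1 a); bbs a.
-
  rewrite size_pdom_progC ltnS => Hs HV Hx; rewrite pdom_progC inE negb_or -pdom_plugt => /andP[xy xd] xh.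
  case: (boolP (x \in A1)) => Hx1.
    have [P0 [U0 [A0 [HX0 HP0 HN0 S10 S20]]]] := IHM P1 U1 A1 (fvar y) x Hs HM Hx1 xd.
    have Hd0 : y \notin pdom P0 by rewrite (pdom_eq HP0).
    have Hy0 : y \notin U0 ++ A0 by move: (S10 y) (S20 y) Hy; bbs y.
    exists (pctxES P0 y (plugT H (fvar h))), U0, A0; split => //.
    * exact: X_gen HX0 Hy0 Hd0.
    * by rewrite plugt_ES plugt_progC HP0.
    * move=> a; move: (S10 a) (S20 a) Hy; bbs a.
    * move=> a; move: (S10 a) (S20 a); bbs a.
  have HxH : x \in anC H by move: Hx Hx1; bbs x.
  have [H0 [HH0 HPH HNH SH1 SH2]] := TL_MA (fvar h) (isHapp_isH HH) HxH.
  exists (progC (plugt P1 (fvar y)) y H0), (sdel y U1 ++ unC H0), (A1 ++ anC H0); split.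
  * exact: X_holeM HM Hy HH0 Hd.
  * by rewrite !plugt_progC HPH.
  * by move: Hx1 HNH; bbs x.
  * move=> a; move: (SH1 a) (SH2 a); bbs a.
  * move=> a; move: (SH1 a) (SH2 a); bbs a.
-
  rewrite size_pdom_ES ltnS => Hs HV Hx; rewrite pdom_ES inE negb_or => /andP[xz xd] xh.
  have zh : z != h by apply: HV_neq HV _.
  have HV1 := HV_ES HV.
  case: (boolP ((x == w) && (z \in A1))) => Hc.
  + case/andP: Hc => /eqP xw HzA; subst w.
    have [P0 [U0 [A0 [HX0 HP0 HN0 S10 S20]]]] := IHX P1 U1 A1 h z Hs HX HV1 HzA Hd zh.
    have Hd0 : z \notin pdom P0 by rewrite (pdom_eq HP0).
    have xd0 : x \notin pdom P0 by rewrite (pdom_eq HP0).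
    case: (boolP (x \in A0)) => Hx0.
      have Hs0 : size (pdom P0) < n by rewrite (pdom_eq HP0).
      have [P2 [U2 [A2 [HX2 HP2 HN2 S12 S22]]]] := IHX P0 U0 A0 z x Hs0 HX0 (HV_fresh Hd0) Hx0 xd0 xz.
      have Hd2 : z \notin pdom P2 by rewrite (pdom_eq HP2).
      have zA2 : z \notin A2 by move: (S22 z) HN0; bbs z.
      case: (boolP (z \in U2 ++ A2)) => Hz2.
        exists (pctxES P2 z (fvar x)), (upd U2 z x), (upd A2 z x); split.
        * exact: X_var HX2 Hz2 Hd2.
        * by rewrite !plugt_ES HP2 HP0.
        * by move: HN2 zA2; bbs x.
        * move=> a; move: (S12 a) (S10 a) (S20 a) (S22 a) HN0 HzA zA2 zh; bbs a.
        * move=> a; move: (S12 a) (S10 a) (S20 a) (S22 a) HN0 HzA zA2; bbs a.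
      exists (pctxES P2 z (fvar x)), U2, A2; split => //.
      * exact: X_gen HX2 Hz2 Hd2.
      * by rewrite !plugt_ES HP2 HP0.
      * move=> a; move: (S12 a) (S10 a) (S20 a) (S22 a) HN0 HzA Hz2 zh; bbs a.
      * move=> a; move: (S12 a) (S10 a) (S20 a) (S22 a) HN0 HzA Hz2; bbs a.
    exists (progC (plugt P0 (fvar z)) z Hole), (sdel z U0), A0; split => //.
    * exact: X_hole HX0 HN0 Hd0.
    * by rewrite plugt_progC plugt_ES HP0.
    * move=> a; move: (S10 a) (S20 a) HN0 HzA zh; bbs a.
    * move=> a; move: (S10 a) (S20 a) HN0 HzA; bbs a.
  + have Hx1 : x \in A1 by move: Hx xz Hc; bbs x.
    have [P0 [U0 [A0 [HX0 HP0 HN0 S10 S20]]]] := IHX P1 U1 A1 h x Hs HX HV1 Hx1 xd xh.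
    have Hd0 : z \notin pdom P0 by rewrite (pdom_eq HP0).
    case: (boolP (z \in U0 ++ A0)) => Hz0.
      exists (pctxES P0 z (fvar w)), (upd U0 z w), (upd A0 z w); split.
      * exact: X_var HX0 Hz0 Hd0.
      * by rewrite !plugt_ES HP0.
      * by move: HN0 xz Hc (S20 z); bbs x.
      * move=> a; move: (S10 a) (S20 a) (S10 z) (S20 z) Hz0 Hz zh; bbs a.
      * move=> a; move: (S10 a) (S20 a) (S10 z) (S20 z) Hz0 Hz zh; bbs a.
    exists (pctxES P0 z (fvar w)), U0, A0; split => //.
    * exact: X_gen HX0 Hz0 Hd0.
    * by rewrite !plugt_ES HP0.
    * move=> a; move: (S10 a) (S20 a) Hz0 Hz; bbs a.
    * move=> a; move: (S10 a) (S20 a) Hz0 Hz; bbs a.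
-
  rewrite size_pdom_ES ltnS => Hs HV Hx; rewrite pdom_ES inE negb_or => /andP[xz xd] xh.
  have zh : z != h by apply: HV_neq HV (inertp_notval Hi).
  have HV1 := HV_ES HV.
  have Hii := inertp_inert Hi.
  case: (boolP (x \in anT i)) => Hxi.
  + have [P0 [U0 [A0 [HM0 HP0 HN0 S10 S20]]]] := LEFT_Xin' HX HV1 Hz Hd zh.
    have Hd0 : z \notin pdom P0 by rewrite (pdom_eq HP0).
    have xd0 : x \notin pdom P0 by rewrite (pdom_eq HP0).
    case: (boolP (x \in A0)) => Hx0.
      have Hs0 : size (pdom P0) < n by rewrite (pdom_eq HP0).
      have [P2 [U2 [A2 [HX2 HP2 HN2 S12 S22]]]] := IHM P0 U0 A0 (fvar z) x Hs0 HM0 Hx0 xd0.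
      have Hz2 : z \notin U2 ++ A2 by move: (S12 z) (S22 z) HN0; bbs z.
      exists (pctxES P2 z i), U2, A2; split => //.
      * apply: X_gen HX2 Hz2 _; by rewrite (pdom_eq HP2).
      * by rewrite !plugt_ES HP2 HP0.
      * move=> a; move: (S12 a) (S10 a) (S20 a) (S22 a) HN0 Hz zh; bbs a.
      * move=> a; move: (S12 a) (S10 a) (S20 a) (S22 a) HN0 Hz; bbs a.
    have [Hi0 [HH0 HPi HNi]] := TL_IA Hii Hxi.
    have SU := @unC_sub Hi0 (fvar x); have SA := @anC_sub Hi0 (fvar x).
    rewrite HPi in SU SA.
    exists (progC (plugt P0 (fvar z)) z Hi0), (sdel z U0 ++ unC Hi0), (A0 ++ anC Hi0); split.
    * exact: X_holeM HM0 HN0 HH0 Hd0.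
    * by rewrite plugt_progC plugt_ES HP0 HPi.
    * by move: Hx0 HNi; bbs x.
    * move=> a; move: (S10 a) (S20 a) (SU a) (SA a) HN0 Hz zh; bbs a.
    * move=> a; move: (S10 a) (S20 a) (SU a) (SA a) HN0 Hz; bbs a.
  + have Hx1 : x \in A1 by move: Hx xz Hxi; bbs x.
    have [P0 [U0 [A0 [HX0 HP0 HN0 S10 S20]]]] := IHX P1 U1 A1 h x Hs HX HV1 Hx1 xd xh.
    have Hd0 : z \notin pdom P0 by rewrite (pdom_eq HP0).
    case: (boolP (z \in U0 ++ A0)) => Hz0.
      exists (pctxES P0 z i), (sdel z U0 ++ unT i), (sdel z A0 ++ anT i); split.
      * exact: X_inert HX0 Hz0 Hi Hd0.
      * by rewrite !plugt_ES HP0.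
      * by move: HN0 xz Hxi; bbs x.
      * move=> a; move: (S10 a) (S20 a) Hz0 Hz zh; bbs a.
      * move=> a; move: (S10 a) (S20 a) Hz0 Hz; bbs a.
    exists (pctxES P0 z i), U0, A0; split => //.
    * exact: X_gen HX0 Hz0 Hd0.
    * by rewrite !plugt_ES HP0.
    * move=> a; move: (S10 a) (S20 a) Hz0 Hz; bbs a.
    * move=> a; move: (S10 a) (S20 a) Hz0 Hz; bbs a.
-
  rewrite size_pdom_ES ltnS => Hs HV Hx; rewrite pdom_ES inE negb_or => /andP[xz xd] xh.
  have HV1 := HV_ES HV.
  have [P0 [U0 [A0 [HX0 HP0 HN0 S10 S20]]]] := IHX P1 U1 A1 h x Hs HX HV1 Hx xd xh.
  have Hd0 : z \notin pdom P0 by rewrite (pdom_eq HP0).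
  case: (boolP (z \in U0 ++ A0)) => Hz0.
    have zh : z = h by apply/eqP; move: Hz0 (S10 z) (S20 z) Hz; bbs z.
    subst h.
    have Ht : is_val t := HV t (lookup_new P1 z t).
    have HzU : z \in U0 by move: Hz0 (S20 z) Hz; bbs z.
    have HzA0 : z \notin A0 by move: (S20 z) Hz; bbs z.
    exists (pctxES P0 z t), (sdel z U0), A0; split => //.
    * exact: X_val HX0 HzU HzA0 Ht Hd0.
    * by rewrite !plugt_ES HP0.
    * move=> a; move: (S10 a) (S20 a); bbs a.
  exists (pctxES P0 z t), U0, A0; split => //.
  * exact: X_gen HX0 Hz0 Hd0.
  * by rewrite !plugt_ES HP0.
-
  rewrite size_pdom_ES ltnS => Hs HV Hx; rewrite pdom_ES inE negb_or => /andP[xz xd] xh.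
  have HV1 := HV_ES HV.
  have [P0 [U0 [A0 [HX0 HP0 HN0 S10 S20]]]] := IHX P1 U1 A1 h x Hs HX HV1 Hx xd xh.
  have Hd0 : z \notin pdom P0 by rewrite (pdom_eq HP0).
  case: (boolP (z \in U0 ++ A0)) => Hz0.
    have HzU : z \in U0 by move: Hz0 (S20 z) HzA; bbs z.
    have HzA0 : z \notin A0 by move: (S20 z) HzA; bbs z.
    exists (pctxES P0 z v), (sdel z U0), A0; split => //.
    * exact: X_val HX0 HzU HzA0 Hv Hd0.
    * by rewrite !plugt_ES HP0.
    * move=> a; move: (S10 a) (S20 a) HzA; bbs a.
  exists (pctxES P0 z v), U0, A0; split => //.
  * exact: X_gen HX0 Hz0 Hd0.
  * by rewrite !plugt_ES HP0.
  * move=> a; move: (S10 a) (S20 a) Hz0 HzA; bbs a.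
-
  rewrite size_pdom_progC ltnS => Hs HV Hx; rewrite pdom_progC inE negb_or -pdom_plugt => /andP[xz xd] xh.
  have [P0 [U0 [A0 [HX0 HP0 HN0 S10 S20]]]] := IHX P1 U1 A1 z x Hs HX (HV_fresh Hd) Hx xd xz.
  have Hd0 : z \notin pdom P0 by rewrite (pdom_eq HP0).
  case: (boolP (z \in U0 ++ A0)) => Hz0.
    exists (pctxES P0 z (fvar h)), (upd U0 z h), (upd A0 z h); split.
    * exact: X_var HX0 Hz0 Hd0.
    * by rewrite plugt_ES plugt_progC HP0.
    * by move: HN0 (S20 z) HzA xh; bbs x.
    * move=> a; move: (S10 a) (S20 a) (S20 z) HzA; bbs a.
    * move=> a; move: (S10 a) (S20 a) (S20 z) HzA; bbs a.
  exists (pctxES P0 z (fvar h)), U0, A0; split => //.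
  * exact: X_gen HX0 Hz0 Hd0.
  * by rewrite plugt_ES plugt_progC HP0.
  * move=> a; move: (S10 a) (S20 a) Hz0 HzA; bbs a.
Qed.

Arguments unP : simpl never. Arguments nvP : simpl never. Arguments anP : simpl never.
Arguments pES : simpl never.
Ltac gen_sets := repeat match goal with
  | |- context [unP ?p] => let U := fresh "Us" in generalize (unP p); intro U
  | |- context [anP ?p] => let U := fresh "As" in generalize (anP p); intro U
  | |- context [nvP ?p] => let U := fresh "Ns" in generalize (nvP p); intro U
  end.
Ltac bbs a ::= gen_sets; presplit a; bb0.

Lemma LEFTX_M P U A s x : Mctx P U A -> x \in A -> x \notin pdom P ->
   exists P0 U0 A0, [/\ Xctx P0 U0 A0, plugt P0 (fvar x) = plugt P s, x \notin A0,
      {subset U0 <= U ++ A} & {subset A0 <= A}].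
Proof. exact: ((LEFTX (size (pdom P)).+1).1 P U A s x (ltnSn _)). Qed.

Lemma LEFTX_X P U A h x : Xctx P U A -> HVp P h -> x \in A -> x \notin pdom P -> x != h ->
   exists P0 U0 A0, [/\ Xctx P0 U0 A0, plugt P0 (fvar x) = plugt P (fvar h), x \notin A0,
      {subset U0 <= U ++ A ++ [:: h]} & {subset A0 <= A}].
Proof. exact: ((LEFTX (size (pdom P)).+1).2 P U A h x (ltnSn _)). Qed.

Lemma GV y p : gvar y p -> exists P, Mctx P [::] [::] /\ plugt P (fvar y) = p.
Proof.
elim=> [x|x z q Hg [P [HM HP]] Hd|x z t q Hg [P [HM HP]] Hne Hd].
- by exists (PC Hole [::]); split => //; exact: (@M_base Hole isT).
- exists (progC (plugt P (fvar x)) x Hole); split.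
  + have Hd' : x \notin pdom P by rewrite (pdom_plugt P (fvar x)) HP.
    exact: (@M_hole _ _ _ _ Hole HM isT isT Hd').
  + by rewrite plugt_progC HP.
- exists (pctxES P z t); split.
  + have Hd' : z \notin pdom P by rewrite (pdom_plugt P (fvar x)) HP.
    exact: (M_gen t HM isT Hd').
  + by rewrite plugt_ES HP.
Qed.

Lemma inert_plus_of i : is_inert i -> ~~ is_var i -> is_inert_plus i.
Proof. by case: i. Qed.

Lemma ES_inert_sub q z i : z \in nvP q -> z \in unP q ++ anP q -> is_inert i ->
  {subset unT i ++ anT i <= unP (pES q z i) ++ anP (pES q z i)} /\ {subset anT i <= anP (pES q z i)}.
Proof.
move=> Hn Hua Hi; rewrite unP_ES anP_ES Hn /=.
case: i Hi => [n|y|t|t1 t2] //= _; split => a; move: Hua Hn; bbs a.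
Qed.

Definition UIM p := forall x, x \in nvP p -> x \notin dom p ->
  exists P0 U0 A0, [/\ Mctx P0 U0 A0, plugt P0 (fvar x) = p, x \notin U0 ++ A0,
     {subset U0 <= unP p ++ anP p} & {subset A0 <= anP p}].
Definition UIX p := forall x, x \in anP p -> x \notin dom p ->
  exists P0 U0 A0, [/\ Xctx P0 U0 A0, plugt P0 (fvar x) = p, x \notin A0,
     {subset U0 <= unP p ++ anP p} & {subset A0 <= anP p}].

Lemma UI p : uinert p -> [/\ {subset nvP p <= unP p ++ anP p}, UIM p & UIX p].
Proof.
elim=> [i Hi|z q i Hg Hi Hd|z q i Hu [N1 M1 X1] Hz Hi Hd|z q v Hu [N1 M1 X1] HzU HzA Hv Hd
  |z q t Hu [N1 M1 X1] Hz Hd].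
-
  have Hii := inertp_inert Hi.
  split.
  + exact: inert_nv.
  + move=> x /= Hx _.
    have [Hi0 [HH0 HP HN]] := TL_I Hii Hx.
    have SU := @unC_sub Hi0 (fvar x); have SA := @anC_sub Hi0 (fvar x); rewrite HP in SU SA.
    exists (PC Hi0 [::]), (unC Hi0), (anC Hi0); split => //; first exact: M_base.
    by rewrite /= HP.
  + move=> x /= Hx _.
    have [Hi0 [HH0 HP HN]] := TL_IA Hii Hx.
    have SU := @unC_sub Hi0 (fvar x); have SA := @anC_sub Hi0 (fvar x); rewrite HP in SU SA.
    exists (PC Hi0 [::]), (unC Hi0), (anC Hi0); split => //; first exact: X_base.
    by rewrite /= HP.
-
  have [Hn Ha Hun] := gvar_sets Hg.
  have Hii := inertp_inert Hi.
  have [P [HM HP]] := GV Hg.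
  have Hd' : z \notin pdom P by rewrite (pdom_plugt P (fvar z)) HP.
  have EN : nvP (pES q z i) = nvT i by rewrite nvP_ES Hn inE eqxx /= /sdel /= eqxx.
  have EU : unP (pES q z i) = unT i by rewrite unP_ES Hun inE eqxx /= /sdel /= eqxx.
  have EA : anP (pES q z i) = anT i.
    by rewrite anP_ES Hn Ha inE eqxx /=; case: i Hi {Hii EN EU}.
  rewrite /UIM /UIX EN EU EA; split.
  + exact: inert_nv.
  + move=> x Hx _.
    have [Hi0 [HH0 HPi HN]] := TL_I Hii Hx.
    have SU := @unC_sub Hi0 (fvar x); have SA := @anC_sub Hi0 (fvar x); rewrite HPi in SU SA.
    exists (progC (plugt P (fvar z)) z Hi0), ([::] ++ unC Hi0), ([::] ++ anC Hi0); split => //.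
    * exact: M_hole HM isT HH0 Hd'.
    * by rewrite plugt_progC HP HPi.
  + move=> x Hx _.
    have [Hi0 [HH0 HPi HN]] := TL_IA Hii Hx.
    have SU := @unC_sub Hi0 (fvar x); have SA := @anC_sub Hi0 (fvar x); rewrite HPi in SU SA.
    exists (progC (plugt P (fvar z)) z Hi0), (sdel z [::] ++ unC Hi0), ([::] ++ anC Hi0); split => //.
    * exact: X_holeM HM isT HH0 Hd'.
    * by rewrite plugt_progC HP HPi.
-
  have Hzua := N1 z Hz.
  have [SI1 SI2] := ES_inert_sub Hz Hzua Hi.
  have KU := @unP_keep q z i; have KA := @anP_keep q z i.
  have Hnv : {subset nvP (pES q z i) <= unP (pES q z i) ++ anP (pES q z i)}.
    move=> a; have Hin := @inert_nv i Hi a; rewrite nvP_ES Hz.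
    move: (N1 a) (KU a) (KA a) (SI1 a) Hin; bbs a.
  split => //.
  + move=> x Hx; rewrite dom_ES inE negb_or => /andP[xz xd].
    case: (boolP (x \in nvT i)) => Hxi.
      have [P0 [U0 [A0 [HM0 HP0 HN0 S10 S20]]]] := M1 z Hz Hd.
      have Hd0 : z \notin pdom P0 by rewrite (pdom_plugt P0 (fvar z)) HP0.
      have xd0 : x \notin pdom P0 by rewrite (pdom_plugt P0 (fvar z)) HP0.
      case: (boolP (x \in U0 ++ A0)) => Hx0.
        have [P2 [U2 [A2 [HM2 HP2 HN2 S12 S22]]]] := LEFT_M' (fvar z) HM0 Hx0 xd0.
        have Hz2 : z \notin U2 ++ A2 by move: (S12 z) (S22 z) HN0; bbs z.
        exists (pctxES P2 z i), U2, A2; split => //.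
        * apply: M_gen HM2 Hz2 _; by rewrite (pdom_eq HP2).
        * by rewrite plugt_ES HP2 HP0.
        * move=> a; move: (S12 a) (S10 a) (S20 a) (S22 a) (KU a) (KA a) HN0; bbs a.
        * move=> a; move: (S12 a) (S10 a) (S20 a) (S22 a) (KA a) HN0; bbs a.
      have [Hi0 [HH0 HPi HNi]] := TL_I Hi Hxi.
      have SU := @unC_sub Hi0 (fvar x); have SA := @anC_sub Hi0 (fvar x); rewrite HPi in SU SA.
      exists (progC (plugt P0 (fvar z)) z Hi0), (U0 ++ unC Hi0), (A0 ++ anC Hi0); split.
      * exact: M_hole HM0 HN0 HH0 Hd0.
      * by rewrite plugt_progC HP0 HPi.
      * by move: Hx0 HNi; bbs x.
      * move=> a; move: (S10 a) (S20 a) (SU a) (SA a) (KU a) (KA a) (SI1 a) (SI2 a) HN0; bbs a.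
      * move=> a; move: (S10 a) (S20 a) (SA a) (KA a) (SI2 a) HN0; bbs a.
    have Hxq : x \in nvP q by move: Hx; rewrite nvP_ES Hz; move: xz Hxi; bbs x.
    have [P0 [U0 [A0 [HM0 HP0 HN0 S10 S20]]]] := M1 x Hxq xd.
    have Hd0 : z \notin pdom P0 by rewrite (pdom_plugt P0 (fvar x)) HP0.
    case: (boolP (z \in U0 ++ A0)) => Hz0.
      case: (boolP (is_var i)) => Hvi.
        case: i Hi Hvi Hxi SI1 SI2 KU KA Hnv {Hx} => // y _ _ Hxi SI1 SI2 KU KA Hnv.
        have KA' : z \in anP q -> y \in anP (pES q z (fvar y)).
          by move=> H; rewrite anP_ES Hz /= H mem_cat inE eqxx orbT.
        exists (pctxES P0 z (fvar y)), (upd U0 z y), (upd A0 z y); split.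
        * exact: M_var HM0 Hz0 Hd0.
        * by rewrite plugt_ES HP0.
        * by move: HN0 xz Hxi; bbs x.
        * move=> a; move: (S10 a) (S20 a) (KU a) (KA a) (SI1 y) (S10 z) (S20 z) Hz0; bbs a.
        * move=> a; move: (S20 a) (KA a) (S20 z) KA'; bbs a.
      have Hip := inert_plus_of Hi Hvi.
      have Hxu := @unT_nv i x; have Hxa := @anT_nv i x.
      exists (pctxES P0 z i), (sdel z U0 ++ unT i), (sdel z A0 ++ anT i); split.
      * exact: M_inert HM0 Hz0 Hip Hd0.
      * by rewrite plugt_ES HP0.
      * by move: HN0 xz Hxi Hxu Hxa; bbs x.
      * move=> a; move: (S10 a) (S20 a) (KU a) (KA a) (SI1 a); bbs a.
      * move=> a; move: (S20 a) (KA a) (SI2 a); bbs a.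
    exists (pctxES P0 z i), U0, A0; split => //.
    * exact: M_gen HM0 Hz0 Hd0.
    * by rewrite plugt_ES HP0.
    * move=> a; move: (S10 a) (S20 a) (KU a) (KA a) Hz0; bbs a.
    * move=> a; move: (S20 a) (KA a) Hz0; bbs a.
  + move=> x Hx; rewrite dom_ES inE negb_or => /andP[xz xd].
    case: (boolP (is_var i)) => Hvi.
      case: i Hi Hvi Hx SI1 SI2 KU KA Hnv => // y _ _ Hx SI1 SI2 KU KA Hnv.
      have EA : anP (pES q z (fvar y)) = if z \in anP q then sdel z (anP q) ++ [:: y] else sdel z (anP q) ++ [::].
        by rewrite anP_ES Hz.
      have KA' : z \in anP q -> y \in anP (pES q z (fvar y)).
        by move=> H; rewrite EA H mem_cat inE eqxx orbT.
      case: (boolP ((x == y) && (z \in anP q))) => Hc.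
        case/andP: Hc => /eqP xy HzA; subst y.
        have [P0 [U0 [A0 [HX0 HP0 HN0 S10 S20]]]] := X1 z HzA Hd.
        have Hd0 : z \notin pdom P0 by rewrite (pdom_plugt P0 (fvar z)) HP0.
        have xd0 : x \notin pdom P0 by rewrite (pdom_plugt P0 (fvar z)) HP0.
        case: (boolP (x \in A0)) => Hx0.
          have [P2 [U2 [A2 [HX2 HP2 HN2 S12 S22]]]] := LEFTX_X HX0 (HV_fresh Hd0) Hx0 xd0 xz.
          have Hd2 : z \notin pdom P2 by rewrite (pdom_eq HP2).
          have zA2 : z \notin A2 by move: (S22 z) HN0; bbs z.
          case: (boolP (z \in U2 ++ A2)) => Hz2.
            exists (pctxES P2 z (fvar x)), (upd U2 z x), (upd A2 z x); split.
            * exact: X_var HX2 Hz2 Hd2.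
            * by rewrite plugt_ES HP2 HP0.
            * by move: HN2 zA2; bbs x.
            * move=> a; move: (S12 a) (S10 a) (S20 a) (KU a) (KA a) HN0 Hx; bbs a.
            * move=> a; move: (S22 a) (S20 a) (KA a) HN0 zA2; bbs a.
          exists (pctxES P2 z (fvar x)), U2, A2; split => //.
          * exact: X_gen HX2 Hz2 Hd2.
          * by rewrite plugt_ES HP2 HP0.
          * move=> a; move: (S12 a) (S10 a) (S20 a) (KU a) (KA a) HN0 Hx Hz2; bbs a.
          * move=> a; move: (S22 a) (S20 a) (KA a) HN0 zA2; bbs a.
        exists (progC (plugt P0 (fvar z)) z Hole), (sdel z U0), A0; split => //.
        * exact: X_hole HX0 HN0 Hd0.
        * by rewrite plugt_progC HP0.
        * move=> a; move: (S10 a) (S20 a) (KU a) (KA a) HN0; bbs a.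
        * move=> a; move: (S20 a) (KA a) HN0; bbs a.
      have Hxq : x \in anP q by move: Hx; rewrite EA; move: xz Hc; bbs x.
      have [P0 [U0 [A0 [HX0 HP0 HN0 S10 S20]]]] := X1 x Hxq xd.
      have Hd0 : z \notin pdom P0 by rewrite (pdom_plugt P0 (fvar x)) HP0.
      case: (boolP (z \in U0 ++ A0)) => Hz0.
        exists (pctxES P0 z (fvar y)), (upd U0 z y), (upd A0 z y); split.
        * exact: X_var HX0 Hz0 Hd0.
        * by rewrite plugt_ES HP0.
        * by move: HN0 xz Hc (S20 z); bbs x.
        * move=> a; move: (S10 a) (KU a) (KA a) (SI1 y) (S10 z) (S20 z) Hz0; bbs a.
        * move=> a; move: (S20 a) (KA a) (S20 z) KA'; bbs a.
      exists (pctxES P0 z (fvar y)), U0, A0; split => //.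
      * exact: X_gen HX0 Hz0 Hd0.
      * by rewrite plugt_ES HP0.
      * move=> a; move: (S10 a) (KU a) (KA a) Hz0; bbs a.
      * move=> a; move: (S20 a) (KA a) Hz0; bbs a.
    have Hip := inert_plus_of Hi Hvi.
    have EA : anP (pES q z i) = sdel z (anP q) ++ anT i.
      by rewrite anP_ES Hz; case: i Hi Hvi {Hx SI1 SI2 KU KA Hnv Hip}.
    case: (boolP (x \in anT i)) => Hxi.
      have [P0 [U0 [A0 [HM0 HP0 HN0 S10 S20]]]] := M1 z Hz Hd.
      have Hd0 : z \notin pdom P0 by rewrite (pdom_plugt P0 (fvar z)) HP0.
      have xd0 : x \notin pdom P0 by rewrite (pdom_plugt P0 (fvar z)) HP0.
      case: (boolP (x \in A0)) => Hx0.
        have [P2 [U2 [A2 [HX2 HP2 HN2 S12 S22]]]] := LEFTX_M (fvar z) HM0 Hx0 xd0.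
        have Hz2 : z \notin U2 ++ A2 by move: (S12 z) (S22 z) HN0; bbs z.
        exists (pctxES P2 z i), U2, A2; split => //.
        * apply: X_gen HX2 Hz2 _; by rewrite (pdom_eq HP2).
        * by rewrite plugt_ES HP2 HP0.
        * move=> a; move: (S12 a) (S10 a) (S20 a) (S22 a) (KU a) (KA a) HN0; bbs a.
        * move=> a; move: (S12 a) (S10 a) (S20 a) (S22 a) (KA a) HN0; bbs a.
      have [Hi0 [HH0 HPi HNi]] := TL_IA Hi Hxi.
      have SU := @unC_sub Hi0 (fvar x); have SA := @anC_sub Hi0 (fvar x); rewrite HPi in SU SA.
      exists (progC (plugt P0 (fvar z)) z Hi0), (sdel z U0 ++ unC Hi0), (A0 ++ anC Hi0); split.
      * exact: X_holeM HM0 HN0 HH0 Hd0.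
      * by rewrite plugt_progC HP0 HPi.
      * by move: Hx0 HNi; bbs x.
      * move=> a; move: (S10 a) (S20 a) (SU a) (SA a) (KU a) (KA a) (SI1 a) (SI2 a) HN0; bbs a.
      * move=> a; move: (S10 a) (S20 a) (SA a) (KA a) (SI2 a) HN0; bbs a.
    have Hxq : x \in anP q by move: Hx; rewrite EA; move: xz Hxi; bbs x.
    have [P0 [U0 [A0 [HX0 HP0 HN0 S10 S20]]]] := X1 x Hxq xd.
    have Hd0 : z \notin pdom P0 by rewrite (pdom_plugt P0 (fvar x)) HP0.
    case: (boolP (z \in U0 ++ A0)) => Hz0.
      exists (pctxES P0 z i), (sdel z U0 ++ unT i), (sdel z A0 ++ anT i); split.
      * exact: X_inert HX0 Hz0 Hip Hd0.
      * by rewrite plugt_ES HP0.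
      * by move: HN0 xz Hxi; bbs x.
      * move=> a; move: (S10 a) (S20 a) (KU a) (KA a) (SI1 a); bbs a.
      * move=> a; move: (S20 a) (KA a) (SI2 a); bbs a.
    exists (pctxES P0 z i), U0, A0; split => //.
    * exact: X_gen HX0 Hz0 Hd0.
    * by rewrite plugt_ES HP0.
    * move=> a; move: (S10 a) (S20 a) (KU a) (KA a) Hz0; bbs a.
    * move=> a; move: (S20 a) (KA a) Hz0; bbs a.
-
  have Hzn : z \in nvP q := unP_nv HzU.
  case: v Hv => // b _.
  have EN : nvP (pES q z (lam b)) = sdel z (nvP q) by rewrite nvP_ES Hzn cats0.
  have EU : unP (pES q z (lam b)) = sdel z (unP q) by rewrite unP_ES HzU cats0.
  have EA : anP (pES q z (lam b)) = sdel z (anP q) by rewrite anP_ES Hzn cats0.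
  rewrite /UIM /UIX EN EU EA dom_ES; split.
  + move=> a; move: (N1 a); bbs a.
  + move=> x Hx; rewrite inE negb_or => /andP[xz xd].
    have Hxq : x \in nvP q by move: Hx; rewrite mem_sdel => /andP[].
    have [P0 [U0 [A0 [HM0 HP0 HN0 S10 S20]]]] := M1 x Hxq xd.
    have Hd0 : z \notin pdom P0 by rewrite (pdom_plugt P0 (fvar x)) HP0.
    case: (boolP (z \in U0 ++ A0)) => Hz0.
      have HzU0 : z \in U0 by move: Hz0 (S20 z) HzA; bbs z.
      have HzA0 : z \notin A0 by move: (S20 z) HzA; bbs z.
      exists (pctxES P0 z (lam b)), (sdel z U0), A0; split.
      * exact: (@M_val _ _ _ _ (lam b) HM0 HzU0 HzA0 isT Hd0).
      * by rewrite plugt_ES HP0.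
      * by move: HN0 xz; bbs x.
      * move=> a; move: (S10 a) (S20 a) HzA; bbs a.
      * move=> a; move: (S20 a) HzA; bbs a.
    exists (pctxES P0 z (lam b)), U0, A0; split => //.
    * exact: M_gen HM0 Hz0 Hd0.
    * by rewrite plugt_ES HP0.
    * move=> a; move: (S10 a) (S20 a) HzA Hz0; bbs a.
    * move=> a; move: (S20 a) HzA Hz0; bbs a.
  + move=> x Hx; rewrite inE negb_or => /andP[xz xd].
    have Hxq : x \in anP q by move: Hx; rewrite mem_sdel => /andP[].
    have [P0 [U0 [A0 [HX0 HP0 HN0 S10 S20]]]] := X1 x Hxq xd.
    have Hd0 : z \notin pdom P0 by rewrite (pdom_plugt P0 (fvar x)) HP0.
    case: (boolP (z \in U0 ++ A0)) => Hz0.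
      have HzU0 : z \in U0 by move: Hz0 (S20 z) HzA; bbs z.
      have HzA0 : z \notin A0 by move: (S20 z) HzA; bbs z.
      exists (pctxES P0 z (lam b)), (sdel z U0), A0; split.
      * exact: (@X_val _ _ _ _ (lam b) HX0 HzU0 HzA0 isT Hd0).
      * by rewrite plugt_ES HP0.
      * done.
      * move=> a; move: (S10 a) (S20 a) HzA; bbs a.
      * move=> a; move: (S20 a) HzA; bbs a.
    exists (pctxES P0 z (lam b)), U0, A0; split => //.
    * exact: X_gen HX0 Hz0 Hd0.
    * by rewrite plugt_ES HP0.
    * move=> a; move: (S10 a) (S20 a) HzA Hz0; bbs a.
    * move=> a; move: (S20 a) HzA Hz0; bbs a.
-
  have HzU : z \notin unP q by apply: contra Hz; apply: unP_nv.
  have HzA : z \notin anP q by apply: contra Hz; apply: anP_nv.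
  have EN : nvP (pES q z t) = nvP q by rewrite nvP_ES (negbTE Hz).
  have EU : unP (pES q z t) = unP q by rewrite unP_ES (negbTE HzU) (negbTE Hz).
  have EA : anP (pES q z t) = anP q by rewrite anP_ES Hz.
  rewrite /UIM /UIX EN EU EA dom_ES; split => //.
  + move=> x Hx; rewrite inE negb_or => /andP[xz xd].
    have [P0 [U0 [A0 [HM0 HP0 HN0 S10 S20]]]] := M1 x Hx xd.
    have Hd0 : z \notin pdom P0 by rewrite (pdom_plugt P0 (fvar x)) HP0.
    have Hz0 : z \notin U0 ++ A0 by move: (S10 z) (S20 z) HzU HzA; bbs z.
    exists (pctxES P0 z t), U0, A0; split => //.
    * exact: M_gen HM0 Hz0 Hd0.
    * by rewrite plugt_ES HP0.
  + move=> x Hx; rewrite inE negb_or => /andP[xz xd].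
    have [P0 [U0 [A0 [HX0 HP0 HN0 S10 S20]]]] := X1 x Hx xd.
    have Hd0 : z \notin pdom P0 by rewrite (pdom_plugt P0 (fvar x)) HP0.
    have Hz0 : z \notin U0 ++ A0 by move: (S10 z) (S20 z) HzU HzA; bbs z.
    exists (pctxES P0 z t), U0, A0; split => //.
    * exact: X_gen HX0 Hz0 Hd0.
    * by rewrite plugt_ES HP0.
Qed.


Definition STEP (p : prog) :=
  (exists P U A t u, Mctx P U A /\ p = plugt P (app (lam t) u)) \/
  (exists P U A h v, [/\ Xctx P U A, p = plugt P (fvar h), lookup P h v & is_val v]).

Definition fresh (l : seq nat) := (foldr maxn 0 l).+1.
Lemma fresh_notin l : fresh l \notin l.
Proof.
have H : forall a, a \in l -> a <= foldr maxn 0 l.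
  elim: l => //= b l IH a; rewrite inE => /orP[/eqP->|/IH H]; first exact: leq_maxl.
  exact: leq_trans H (leq_maxr _ _).
by apply/negP => /H; rewrite /fresh ltnn.
Qed.

Lemma STEP_step p : STEP p -> exists q, step_und p q.
Proof.
case=> [[P [U [A [t [u [HM E]]]]]]|[P [U [A [h [v [HX E Hl Hv]]]]]]].
- exists (plug P (open t (fresh (allvars p)), [:: (fresh (allvars p), u)])); left.
  exists P, U, A, t, u, (fresh (allvars p)); split => //; split => //; split => //.
  exact: fresh_notin.
- exists (plugt P v); right; exists P, U, A, h, v; split => //.
Qed.

Lemma wf_cons t x u E : wf_prog (t, (x, u) :: E) ->
  [/\ wf_prog (t, E), x \notin map fst E & lc u].
Proof.
rewrite /wf_prog /dom /= => /andP[/andP[/andP[Ht Hall] Huniq] Hsc].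
case/andP: Hall => Hu HE; case/andP: Huniq => Hx Hun; case/andP: Hsc => _ Hs.
by rewrite Ht HE Hun Hs Hx Hu.
Qed.

Lemma HV_wf P h v : lookup P h v -> is_val v -> uniq (dom (plugt P (fvar h))) -> HVp P h.
Proof.
move=> Hl Hv Hu w Hw.
have E := uniq_In Hu (lookup_In (fvar h) Hl) (lookup_In (fvar h) Hw).
by rewrite -E.
Qed.

Lemma DEC p : wf_prog p -> unorm p \/ STEP p.
Proof.
case: p => t E; elim: E => [|[x u] E IH].
  rewrite /wf_prog /= !andbT => Ht.
  case: (TRM Ht) => [Hv|Hv|Hv|[H [t1 [t2 [HH Et]]]]].
  - by left; right; right; case: t Hv {Ht} => // y _; exists y; constructor.
  - by left; right; left; constructor.
  - by left; left; constructor.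
  - right; left; exists (PC H [::]), (unC H), (anC H), t1, t2; split; first exact: M_base.
    by rewrite /= Et.
move=> Hwf; have [Hwf' Hxd Hu] := wf_cons Hwf.
have Hud : uniq (x :: map fst E) by move: Hwf; rewrite /wf_prog /dom /= => /andP[/andP[_ ->]].
set q := (t, E).
have Eq : (t, (x, u) :: E) = pES q x u by [].
have Hxq : x \notin dom q by [].
rewrite Eq.
case: (IH Hwf') => [Hn|[[P [U [A [t1 [t2 [HM Ep]]]]]]|[P [U [A [h [v [HX Ep Hl Hv]]]]]]]].
-
  case: Hn => [Hui|[Hua|[y Hg]]].
  + case: (boolP (x \in nvP q)) => Hxn; last by left; left; apply: uinert_skip.
    have [N1 M1 X1] := UI Hui.
    case: (TRM Hu) => [Hvu|Hvu|Hvu|[H [t1 [t2 [HH Et]]]]].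
    * by left; left; apply: uinert_inert => //; case: u Hvu {Hu Hwf Eq}.
    * case: (boolP (x \in anP q)) => Hxa.
        have [P0 [U0 [A0 [HX0 HP0 HN0 S10 S20]]]] := X1 x Hxa Hxq.
        have Hd0 : x \notin pdom P0 by rewrite (pdom_plugt P0 (fvar x)) HP0.
        case: (boolP (x \in U0)) => HxU.
          right; right; exists (pctxES P0 x u), (sdel x U0), A0, x, u.
          split => //; [exact: X_val HX0 HxU HN0 Hvu Hd0|by rewrite plugt_ES HP0|exact: lookup_new].
        have HxUA : x \notin U0 ++ A0 by rewrite mem_cat negb_or HxU.
        right; right; exists (pctxES P0 x u), U0, A0, x, u.
        split => //; [exact: X_gen HX0 HxUA Hd0|by rewrite plugt_ES HP0|exact: lookup_new].
      left; left; apply: uinert_val => //.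
      by move: (N1 x Hxn); rewrite mem_cat (negbTE Hxa) orbF.
    * by left; left; apply: uinert_inert => //; apply: inertp_inert.
    * have [P0 [U0 [A0 [HM0 HP0 HN0 S10 S20]]]] := M1 x Hxn Hxq.
      have Hd0 : x \notin pdom P0 by rewrite (pdom_plugt P0 (fvar x)) HP0.
      right; left; exists (progC (plugt P0 (fvar x)) x H), (U0 ++ unC H), (A0 ++ anC H), t1, t2; split.
        exact: M_hole HM0 HN0 HH Hd0.
      by rewrite plugt_progC HP0 Et.
  + by left; right; left; apply: uabs_skip.
  + have [xy|xy] := eqVneq x y.
      subst y.
      case: (TRM Hu) => [Hvu|Hvu|Hvu|[H [t1 [t2 [HH Et]]]]].
      * by case: u Hvu {Hu Hwf Eq} => // z _; left; right; right; exists z; apply: gvar_ren.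
      * by left; right; left; apply: uabs_var Hg Hvu Hxq.
      * by left; left; apply: uinert_var Hg Hvu Hxq.
      * have [P [HM HP]] := GV Hg.
        have Hd : x \notin pdom P by rewrite (pdom_plugt P (fvar x)) HP.
        right; left; exists (progC (plugt P (fvar x)) x H), ([::] ++ unC H), ([::] ++ anC H), t1, t2; split.
          exact: M_hole HM isT HH Hd.
        by rewrite plugt_progC HP Et.
    by left; right; right; exists y; apply: gvar_skip.
-
  have Hd : x \notin pdom P by rewrite (pdom_plugt P (app (lam t1) t2)) -Ep.
  case: (boolP (x \in U ++ A)) => Hx; last first.
    right; left; exists (pctxES P x u), U, A, t1, t2; split; first exact: M_gen HM Hx Hd.
    by rewrite plugt_ES -Ep.
  case: (TRM Hu) => [Hvu|Hvu|Hvu|[H [s1 [s2 [HH Et]]]]].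
  + case: u Hvu {Hu Hwf Eq} => // y _.
    right; left; exists (pctxES P x (fvar y)), (upd U x y), (upd A x y), t1, t2; split; first exact: M_var HM Hx Hd.
    by rewrite plugt_ES -Ep.
  + case: (boolP (x \in A)) => HxA.
      have [P0 [U0 [A0 [HX0 HP0 HN0 S10 S20]]]] := LEFTX_M (app (lam t1) t2) HM HxA Hd.
      have Hd0 : x \notin pdom P0 by rewrite (pdom_eq HP0).
      case: (boolP (x \in U0)) => HxU.
        right; right; exists (pctxES P0 x u), (sdel x U0), A0, x, u.
        split => //; [exact: X_val HX0 HxU HN0 Hvu Hd0|by rewrite plugt_ES HP0 -Ep|exact: lookup_new].
      have HxUA : x \notin U0 ++ A0 by rewrite mem_cat negb_or HxU.
      right; right; exists (pctxES P0 x u), U0, A0, x, u.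
      split => //; [exact: X_gen HX0 HxUA Hd0|by rewrite plugt_ES HP0 -Ep|exact: lookup_new].
    have HxU : x \in U by move: Hx; rewrite mem_cat (negbTE HxA) orbF.
    right; left; exists (pctxES P x u), (sdel x U), A, t1, t2; split; first exact: M_val HM HxU HxA Hvu Hd.
    by rewrite plugt_ES -Ep.
  + right; left; exists (pctxES P x u), (sdel x U ++ unT u), (sdel x A ++ anT u), t1, t2; split; first exact: M_inert HM Hx Hvu Hd.
    by rewrite plugt_ES -Ep.
  + have [P0 [U0 [A0 [HM0 HP0 HN0 S10 S20]]]] := LEFT_M' (app (lam t1) t2) HM Hx Hd.
    have Hd0 : x \notin pdom P0 by rewrite (pdom_eq HP0).
    right; left; exists (progC (plugt P0 (fvar x)) x H), (U0 ++ unC H), (A0 ++ anC H), s1, s2; split.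
      exact: M_hole HM0 HN0 HH Hd0.
    by rewrite plugt_progC HP0 -Ep Et.
-
  have Hd : x \notin pdom P by rewrite (pdom_plugt P (fvar h)) -Ep.
  have xh : x != h by apply: contraNneq Hd => ->; exact: lookup_pdom Hl.
  have HV : HVp P h.
    apply: HV_wf Hl Hv _; rewrite -Ep; by case/andP: Hud.
  have Hl' := lookup_ES' x u Hl.
  case: (boolP (x \in U ++ A)) => Hx; last first.
    right; right; exists (pctxES P x u), U, A, h, v; split => //; first exact: X_gen HX Hx Hd.
    by rewrite plugt_ES -Ep.
  case: (TRM Hu) => [Hvu|Hvu|Hvu|[H [s1 [s2 [HH Et]]]]].
  + case: u Hvu Hl' {Hu Hwf Eq} => // y _ Hl'.
    right; right; exists (pctxES P x (fvar y)), (upd U x y), (upd A x y), h, v; split => //; first exact: X_var HX Hx Hd.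
    by rewrite plugt_ES -Ep.
  + case: (boolP (x \in A)) => HxA.
      have [P0 [U0 [A0 [HX0 HP0 HN0 S10 S20]]]] := LEFTX_X HX HV HxA Hd xh.
      have Hd0 : x \notin pdom P0 by rewrite (pdom_eq HP0).
      case: (boolP (x \in U0)) => HxU.
        right; right; exists (pctxES P0 x u), (sdel x U0), A0, x, u.
        split => //; [exact: X_val HX0 HxU HN0 Hvu Hd0|by rewrite plugt_ES HP0 -Ep|exact: lookup_new].
      have HxUA : x \notin U0 ++ A0 by rewrite mem_cat negb_or HxU.
      right; right; exists (pctxES P0 x u), U0, A0, x, u.
      split => //; [exact: X_gen HX0 HxUA Hd0|by rewrite plugt_ES HP0 -Ep|exact: lookup_new].
    have HxU : x \in U by move: Hx; rewrite mem_cat (negbTE HxA) orbF.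
    right; right; exists (pctxES P x u), (sdel x U), A, h, v; split => //; first exact: X_val HX HxU HxA Hvu Hd.
    by rewrite plugt_ES -Ep.
  + right; right; exists (pctxES P x u), (sdel x U ++ unT u), (sdel x A ++ anT u), h, v; split => //; first exact: X_inert HX Hx Hvu Hd.
    by rewrite plugt_ES -Ep.
  + have [P0 [U0 [A0 [HM0 HP0 HN0 S10 S20]]]] := LEFT_Xin' HX HV Hx Hd xh.
    have Hd0 : x \notin pdom P0 by rewrite (pdom_eq HP0).
    right; left; exists (progC (plugt P0 (fvar x)) x H), (U0 ++ unC H), (A0 ++ anC H), s1, s2; split.
      exact: M_hole HM0 HN0 HH Hd0.
    by rewrite plugt_progC HP0 -Ep Et.
Qed.

Theorem mainTheorem8 (p : prog) :
  wf_prog p -> ((~ exists q, step_und p q) <-> unorm p).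
Proof.
move=> Hwf; split.
  move=> Hns; case: (DEC Hwf) => // /STEP_step Hs; by case: Hns.
move=> Hu [q [[P [U [A [t [u [x [HM [Ep _]]]]]]]]|[P [U [A [x [v [HX [Ep [Hl [Hv _]]]]]]]]]]].
- by have := @LM P U A HM (app (lam t) u); rewrite -Ep => /(_ Hu).
- have Hsc : scoped (plugt P (fvar x)).2.
    by move: Hwf; rewrite Ep /wf_prog => /andP[_ ->].
  by apply: (XL HX Hl Hv Hsc); rewrite -Ep.
Qed.
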